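(* Let $M$, $\alpha,\beta,\gamma$ satisfy the standing assumptions described in the context, let $T>0$ and $b$ be as fixed in the context, let $N>0$, and for $\xi\in\mathbb{R}^n$ let $W(t,\xi)\in\mathbb{C}^2$ be any solution on $[T,\infty)$ of $$\partial_t W=\begin{pmatrix}-2b(t)& i|\xi|\\ i|\xi|&0\end{pmatrix}W .$$ Then there exists a positive constant $K_2$ such that, for all $(t,\xi)\in Z_\Psi$ with $\xi\ne0$: if $\alpha>0$, then $K_2^{-1}|W(T,\xi)|\le|W(t,\xi)|\le K_2|W(T,\xi)|$; if $\alpha\le0$, then $K_2^{-1}|W(t_\xi,\xi)|\le|W(t,\xi)|\le K_2|W(t_\xi,\xi)|$.
   Context: Standing assumptions: $M:[0,\infty)\to\mathbb{R}$ continuous; $\alpha\le1$, $\beta<1$, $\gamma>0$ with $\gamma\ge\beta\ge(\alpha+1)/2$ if $\alpha\ne0$ and $\gamma\ge\beta>1/2$ if $\alpha=0$; $M$ satisfies: (M1) if $\alpha\ge 0$, $\int_0^t\big|\int_s^\infty\int_\sigma^\infty M(\tau)\,d\tau\,d\sigma\big|\,ds\lesssim(1+t)^{\alpha}$; if $\alpha\le 0$, $\int_t^\infty\big|\int_s^\infty\int_\sigma^\infty M(\tau)\,d\tau\,d\sigma\big|\,ds\lesssim(1+t)^{\alpha}$ (both when $\alpha=0$); (M2) $|M(t)|\lesssim(1+t)^{-2\beta}$; (M3) $\big|\int_t^\infty M\big|\lesssim(1+t)^{-\gamma}$, $\int_t^\infty\big(\int_s^\infty M\big)^2ds\lesssim(1+t)^{-\gamma}$,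 $\int_0^\infty\int_t^\infty\big(\int_s^\infty M\big)^2\,ds\,dt<\infty$; and $\sup_{t\ge0}(1+t)^\alpha\int_t^\infty\int_s^\infty(\int_\sigma^\infty M)^2\,d\sigma\,ds<\infty$; here $f\lesssim g$ means $f\le Cg$ with $C$ independent of $t$. Definition of $b$ and $T$: $q_1:=M$, $Q_k(t):=-\int_t^\infty q_k$, $q_k:=\sum_{j=1}^{k-1}Q_jQ_{k-j}$ ($k\ge2$), $\phi(t):=-\int_t^\infty Q_2$; $T>0$ is chosen so that $|\int_t^\infty Q_1(s)\,ds|\le1$ and $\phi(t)\le6^{-4}$ for all $t\ge T$, and $b(t):=\sum_{k\ge1}Q_k(t)$ on $[T,\infty)$. Zones: $Z_\Psi:=\{(t,\xi)\in[T,\infty)\times\mathbb{R}^n:(1+t)^\alpha|\xi|\le N\}$; for $\alpha\ne0$, $\xi\ne0$, $t_\xi:=\max\{T,(N|\xi|^{-1})^{1/\alpha}-1\}$, and for $\alpha=0$ set $t_\xi:=T$. *)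

(* Defs.v *)
From Stdlib Require Import Reals List.
From Coquelicot Require Import Coquelicot.
Open Scope R_scope.

Definition pinf : (R -> Prop) -> Prop := Rbar_locally p_infty.

(* improper integral  \int_t^\infty f  (total operator; meaningful when
   ex_RInt_gen f (at_point t) pinf holds) *)
Definition Iinf (f : R -> R) (t : R) : R := RInt_gen f (at_point t) pinf.

Definition pw (t a : R) : R := Rpower (1 + t) a.

(* [Q_1; ...; Q_k] :  q_1 = M, Q_k = - \int_t^\infty q_k,
   q_k = sum_{j=1}^{k-1} Q_j Q_{k-j}  (k >= 2) *)
Fixpoint Qlist (M : R -> R) (k : nat) : list (R -> R) :=
  match k with
  | O => nil
  | S O => (fun t => - Iinf M t) :: nil
  | S k' =>
      let l := Qlist M k' in
      l ++ ((fun t =>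
               - Iinf (fun s =>
                   fold_right Rplus 0
                     (map (fun j => nth (j - 1) l (fun _ => 0) s
                                    * nth (k' - j) l (fun _ => 0) s)
                          (seq 1 k'))) t) :: nil)
  end.

Definition Qk (M : R -> R) (k : nat) : R -> R :=
  nth (k - 1) (Qlist M k) (fun _ => 0).

Definition phi (M : R -> R) (t : R) : R := - Iinf (Qk M 2) t.

Definition bfun (M : R -> R) (t : R) : R := Series (fun k => Qk M (S k) t).

(* Euclidean norm of xi in R^n, with R^n represented by lists of length n *)
Definition enorm (xi : list R) : R :=
  sqrt (fold_right (fun x acc => x ^ 2 + acc) 0 xi).

Definition cnorm2 (w : Coquelicot.Complex.C * Coquelicot.Complex.C) : R :=
  sqrt (Cmod (fst w) ^ 2 + Cmod (snd w) ^ 2).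

Definition t_xi (T N alpha : R) (xi : list R) : R :=
  if Req_EM_T alpha 0 then T
  else Rmax T (Rpower (N / enorm xi) (1 / alpha) - 1).

(* Main.v *)
Require Import Defs.
From Stdlib Require Import Reals List Lra Lia Psatz.
From Coquelicot Require Import Coquelicot.
Open Scope R_scope.

Definition cont_on (f : R -> R) := forall x, 0 < x -> continuous f x.


Lemma cR_plus (f g : R -> R) x : continuous f x -> continuous g x -> continuous (fun y => f y + g y) x.
Proof. intros. apply (@continuous_plus R_UniformSpace R_AbsRing R_NormedModule f g x); auto. Qed.
Lemma cR_mult (f g : R -> R) x : continuous f x -> continuous g x -> continuous (fun y => f y * g y) x.
Proof. intros. apply (@continuous_mult R_UniformSpace R_AbsRing f g x); auto. Qed.
Lemma cR_scal c (f : R -> R) x : continuous f x -> continuous (fun y => c * f y) x.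
Proof. intros. apply (@continuous_scal_r R_UniformSpace R_AbsRing R_NormedModule c f x); auto. Qed.
Lemma cR_opp (f : R -> R) x : continuous f x -> continuous (fun y => - f y) x.
Proof. intros. apply (@continuous_opp R_UniformSpace R_AbsRing R_NormedModule f x); auto. Qed.
Lemma cR_const (c : R) x : continuous (fun _ : R => c) x.
Proof. apply (@continuous_const R_UniformSpace R_UniformSpace c x). Qed.
Lemma cR_abs (f : R -> R) x : continuous f x -> continuous (fun y => Rabs (f y)) x.
Proof. intros. apply continuous_Rabs_comp; auto. Qed.

Lemma ballR (l e z : R) : ball l e z <-> Rabs (z - l) < e.
Proof. split; intros H; exact H. Qed.

Lemma fp_at (a c : R) (P : R * R -> Prop) :
  (forall y, c < y -> P (a, y)) -> filter_prod (at_point a) pinf P.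
Proof.
  intros H. apply (Filter_prod _ _ _ (fun x => x = a) (fun y => c < y)).
  - reflexivity.
  - exists c. auto.
  - intros x y -> Hy. auto.
Qed.

Lemma ex_RInt_co f a b : cont_on f -> 0 < a -> 0 < b -> ex_RInt f a b.
Proof.
  intros Hf Ha Hb. apply (@ex_RInt_continuous R_CompleteNormedModule). intros z Hz. apply Hf.
  destruct Hz as [Hz _]. unfold Rmin in Hz. destruct (Rle_dec a b); lra.
Qed.

Lemma Iinf_chasles f a b : cont_on f -> 0 < a -> 0 < b ->
  ex_RInt_gen f (at_point b) pinf ->
  ex_RInt_gen f (at_point a) pinf /\ Iinf f a = RInt f a b + Iinf f b.
Proof.
  intros Hf Ha Hb Hex.
  assert (H1 : ex_RInt_gen f (at_point a) (at_point b)).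
  { apply (proj2 (ex_RInt_gen_at_point f a b)). apply ex_RInt_co; auto. }
  split.
  - eapply ex_RInt_gen_Chasles; eauto.
  - unfold Iinf. rewrite <- (RInt_gen_Chasles f b H1 Hex).
    rewrite RInt_gen_at_point. reflexivity. apply ex_RInt_co; auto.
Qed.

Lemma Iinf_derive f b x : cont_on f -> 0 < b ->
  ex_RInt_gen f (at_point b) pinf -> 0 < x -> is_derive (Iinf f) x (- f x).
Proof.
  intros Hf Hb Hex Hx.
  apply (is_derive_ext_loc (fun a0 => RInt f a0 b + Iinf f b)).
  - exists (mkposreal x Hx). intros y Hy.
    assert (0 < y).
    { unfold ball in Hy; simpl in Hy; unfold AbsRing_ball, abs, minus, plus, opp in Hy; simpl in Hy.
      apply Rabs_lt_between in Hy. lra. }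
    symmetry. apply Iinf_chasles; auto.
  - replace (- f x) with (- f x + 0) by ring.
    apply (is_derive_plus (fun a0 => RInt f a0 b) (fun _ => Iinf f b)).
    + apply (is_derive_RInt' f (fun a0 => RInt f a0 b) x b).
      * exists (mkposreal x Hx). intros y Hy. apply (@RInt_correct R_CompleteNormedModule).
        assert (0 < y).
        { unfold ball in Hy; simpl in Hy; unfold AbsRing_ball, abs, minus, plus, opp in Hy; simpl in Hy.
          apply Rabs_lt_between in Hy. lra. }
        apply ex_RInt_co; auto.
      * apply Hf; auto.
    + apply (@is_derive_const R_AbsRing R_NormedModule).
Qed.

Lemma Iinf_cont f b : cont_on f -> 0 < b ->
  ex_RInt_gen f (at_point b) pinf -> cont_on (Iinf f).
Proof.
  intros Hf Hb Hex x Hx. apply (@ex_derive_continuous R_AbsRing R_NormedModule).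
  eexists. apply (Iinf_derive f b); auto.
Qed.

Lemma Iinf_of_lim f a l : cont_on f -> 0 < a ->
  filterlim (fun x => RInt f a x) pinf (locally l) ->
  is_RInt_gen f (at_point a) pinf l.
Proof.
  intros Hf Ha Hl. intros P HP. specialize (Hl P HP). destruct Hl as [M HM].
  apply (Filter_prod _ _ _ (fun x => x = a) (fun y => Rmax M a < y)).
  - reflexivity.
  - exists (Rmax M a). auto.
  - intros x y -> Hy. simpl. exists (RInt f a y). split.
    + apply (@RInt_correct R_CompleteNormedModule f).
      pose proof (Rmax_r M a). apply ex_RInt_co; auto; lra.
    + apply HM. pose proof (Rmax_l M a). lra.
Qed.

Lemma mono_lim (F : R -> R) a B :
  (forall x y, a <= x -> x <= y -> F x <= F y) ->
  (forall x, a <= x -> F x <= B) ->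
  exists l, filterlim F pinf (locally l) /\ (forall x, a <= x -> F x <= l).
Proof.
  intros Hm Hb.
  set (E := fun v => exists x, a <= x /\ v = F x).
  assert (HE : bound E). { exists B. intros v [x [Hx ->]]. apply Hb; auto. }
  assert (HE2 : exists v, E v). { exists (F a). exists a. split; [lra|auto]. }
  destruct (completeness E HE HE2) as [l [Hub Hlub]].
  exists l. split.
  - apply filterlim_locally. intros eps.
    assert (exists x0, a <= x0 /\ l - eps < F x0).
    { apply Classical_Prop.NNPP. intros Hn.
      assert (l <= l - eps). { apply Hlub. intros v [x [Hx ->]].
        apply Rnot_lt_le. intros Hc. apply Hn. exists x. auto. }
      destruct eps; simpl in *; lra. }
    destruct H as [x0 [Hx0 Hl0]].
    exists (Rmax a x0). intros x Hx.
    assert (F x0 <= F x). { apply Hm; auto. pose proof (Rmax_r a x0); lra. }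
    assert (F x <= l). { apply Hub. exists x. split; auto. pose proof (Rmax_l a x0); lra. }
    unfold ball; simpl; unfold AbsRing_ball, abs, minus, plus, opp; simpl.
    apply Rabs_lt_between. lra.
  - intros x Hx. apply Hub. exists x; auto.
Qed.

Lemma Iinf_correct f a : ex_RInt_gen f (at_point a) pinf ->
  is_RInt_gen f (at_point a) pinf (Iinf f a).
Proof.
  intros H. unfold Iinf. apply (@RInt_gen_correct R_CompleteNormedModule); auto.
  apply Proper_StrongProper, at_point_filter.
  apply Proper_StrongProper, Rbar_locally_filter.
Qed.

Lemma Iinf_unique f a l : is_RInt_gen f (at_point a) pinf l -> Iinf f a = l.
Proof.
  intros H. unfold Iinf. apply (@is_RInt_gen_unique R_CompleteNormedModule); auto.
  apply Proper_StrongProper, at_point_filter.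
  apply Proper_StrongProper, Rbar_locally_filter.
Qed.

Lemma Iinf_norm f g a : ex_RInt_gen f (at_point a) pinf -> ex_RInt_gen g (at_point a) pinf ->
  (forall x, a <= x -> Rabs (f x) <= g x) -> Rabs (Iinf f a) <= Iinf g a.
Proof.
  intros Hf Hg H.
  apply (@RInt_gen_norm R_CompleteNormedModule (at_point a) pinf (at_point_filter a) (Rbar_locally_filter _) f g).
  - apply (fp_at a a). intros y Hy. simpl. lra.
  - apply (fp_at a a). intros y Hy x Hx. simpl in Hx. apply H. lra.
  - apply Iinf_correct; auto.
  - apply Iinf_correct; auto.
Qed.

Lemma Iinf_nonneg g a : ex_RInt_gen g (at_point a) pinf ->
  (forall x, a <= x -> 0 <= g x) -> 0 <= Iinf g a.
Proof.
  intros Hg H. pose proof (Iinf_norm g g a Hg Hg).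
  assert (Rabs (Iinf g a) <= Iinf g a). { apply H0. intros x Hx. rewrite Rabs_pos_eq; auto. lra. }
  pose proof (Rabs_pos (Iinf g a)). lra.
Qed.

Lemma RInt_nonneg g a b : a <= b -> ex_RInt g a b -> (forall x, a <= x <= b -> 0 <= g x) -> 0 <= RInt g a b.
Proof.
  intros Hab Hex H. apply RInt_ge_0; auto. intros x Hx; apply H; lra.
Qed.

Lemma RInt_le_Iinf g a x : cont_on g -> 0 < a -> a <= x ->
  ex_RInt_gen g (at_point a) pinf -> (forall y, a <= y -> 0 <= g y) ->
  RInt g a x <= Iinf g a /\ Iinf g x <= Iinf g a.
Proof.
  intros Hc Ha Hx Hex Hp.
  destruct (Iinf_chasles g x a Hc) as [Hex2 _]; try lra; auto.
  destruct (Iinf_chasles g a x Hc) as [_ Heq]; try lra; auto.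
  rewrite Heq. pose proof (Iinf_nonneg g x Hex2).
  assert (0 <= RInt g a x). { apply RInt_nonneg; auto. apply ex_RInt_co; lra || auto. intros; apply Hp; lra. }
  split.
  - assert (0 <= Iinf g x). { apply H. intros; apply Hp; lra. } lra.
  - lra.
Qed.

Lemma Iinf_dom f g a : cont_on f -> cont_on g -> 0 < a ->
  (forall x, a <= x -> Rabs (f x) <= g x) -> ex_RInt_gen g (at_point a) pinf ->
  ex_RInt_gen f (at_point a) pinf /\ Rabs (Iinf f a) <= Iinf g a.
Proof.
  intros Hf Hg Ha Hd Hex.
  set (h := fun x => f x + g x).
  assert (Hh : cont_on h). { intros x Hx. unfold h. apply cR_plus; auto. }
  assert (Hhp : forall x, a <= x -> 0 <= h x).
  { intros x Hx. unfold h. pose proof (Hd x Hx). pose proof (Rabs_maj2 (f x)). lra. }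
  assert (Hgp : forall x, a <= x -> 0 <= g x). { intros x Hx. pose proof (Hd x Hx). pose proof (Rabs_pos (f x)). lra. }
  destruct (mono_lim (fun x => RInt h a x) a (2 * Iinf g a)) as [l [Hl _]].
  - intros x y Hx Hy.
    rewrite <- (@RInt_Chasles R_CompleteNormedModule h a x y).
    2,3: apply ex_RInt_co; auto; lra.
    assert (0 <= RInt h x y). { apply RInt_nonneg; auto. apply ex_RInt_co; auto; lra. intros; apply Hhp; lra. }
    change (plus (RInt h a x) (RInt h x y)) with (RInt h a x + RInt h x y). lra.
  - intros x Hx.
    assert (RInt h a x <= RInt (fun y => 2 * g y) a x).
    { apply RInt_le; auto. 1,2: apply ex_RInt_co; auto; try lra.
      intros y Hy. apply cR_scal. apply Hg. lra.
      intros y Hy. unfold h. pose proof (Hd y (ltac:(lra))). pose proof (Rle_abs (f y)). lra. }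
    assert (E : RInt (fun y => 2 * g y) a x = 2 * RInt g a x).
    { exact (@RInt_scal R_CompleteNormedModule g a x 2 (ltac:(apply ex_RInt_co; auto; lra))). }
    destruct (RInt_le_Iinf g a x Hg Ha Hx Hex Hgp). lra.
  - assert (Hhi : is_RInt_gen h (at_point a) pinf l) by (apply Iinf_of_lim; auto).
    assert (Hfi : is_RInt_gen f (at_point a) pinf (minus l (Iinf g a))).
    { pose proof (is_RInt_gen_minus h g l (Iinf g a) Hhi (Iinf_correct g a Hex)) as Hm.
      assert (Heq : (fun y => minus (h y) (g y)) = f).
      { apply FunctionalExtensionality.functional_extensionality. intros y. unfold h, minus, plus, opp; simpl. ring. }
      rewrite <- Heq. exact Hm. }
    assert (Hexf : ex_RInt_gen f (at_point a) pinf) by (eexists; eauto).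
    split; auto. apply Iinf_norm; auto.
Qed.

Lemma Iinf_opp f a : ex_RInt_gen f (at_point a) pinf ->
  ex_RInt_gen (fun x => - f x) (at_point a) pinf /\ Iinf (fun x => - f x) a = - Iinf f a.
Proof.
  intros H. pose proof (is_RInt_gen_opp f _ (Iinf_correct f a H)) as H1.
  split. eexists; exact H1. apply Iinf_unique. exact H1.
Qed.

Lemma Iinf_scal c f a : ex_RInt_gen f (at_point a) pinf ->
  ex_RInt_gen (fun x => c * f x) (at_point a) pinf /\ Iinf (fun x => c * f x) a = c * Iinf f a.
Proof.
  intros H. pose proof (is_RInt_gen_scal f c _ (Iinf_correct f a H)) as H1.
  split. eexists; exact H1. apply Iinf_unique. exact H1.
Qed.

Lemma Iinf_plus f g a : ex_RInt_gen f (at_point a) pinf -> ex_RInt_gen g (at_point a) pinf ->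
  ex_RInt_gen (fun x => f x + g x) (at_point a) pinf /\ Iinf (fun x => f x + g x) a = Iinf f a + Iinf g a.
Proof.
  intros H H'. pose proof (is_RInt_gen_plus f g _ _ (Iinf_correct f a H) (Iinf_correct g a H')) as H1.
  split. eexists; exact H1. apply Iinf_unique. exact H1.
Qed.

Fixpoint sm (f : nat -> R) (n : nat) : R :=
  match n with O => 0 | S n => sm f n + f (S n) end.

Lemma sm_ext f g n : (forall j, (1 <= j <= n)%nat -> f j = g j) -> sm f n = sm g n.
Proof. induction n; simpl; intros H; auto. rewrite IHn, H; auto; try lia. intros; apply H; lia. Qed.

Lemma sm_plus f g n : sm (fun j => f j + g j) n = sm f n + sm g n.
Proof. induction n; simpl; try ring. rewrite IHn. ring. Qed.

Lemma sm_scal c f n : sm (fun j => c * f j) n = c * sm f n.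
Proof. induction n; simpl; try ring. rewrite IHn. ring. Qed.

Lemma sm_le f g n : (forall j, (1 <= j <= n)%nat -> f j <= g j) -> sm f n <= sm g n.
Proof. induction n; simpl; intros H; try lra. pose proof (H (S n) ltac:(lia)).
  assert (sm f n <= sm g n) by (apply IHn; intros; apply H; lia). lra. Qed.

Lemma sm_abs f n : Rabs (sm f n) <= sm (fun j => Rabs (f j)) n.
Proof. induction n; simpl. rewrite Rabs_R0; lra.
  eapply Rle_trans. apply Rabs_triang. lra. Qed.

Lemma sm_nonneg f n : (forall j, (1 <= j <= n)%nat -> 0 <= f j) -> 0 <= sm f n.
Proof. intros H. replace 0 with (sm (fun _ => 0) n). apply sm_le; auto.
  clear H; induction n; simpl; auto. rewrite IHn; ring. Qed.

Lemma sm_shift f n : sm f (S n) = f 1%nat + sm (fun k => f (S k)) n.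
Proof. induction n; simpl in *. ring. rewrite IHn. ring. Qed.

Lemma fold_r_c (l : list R) c : fold_right Rplus c l = fold_right Rplus 0 l + c.
Proof. induction l; simpl. ring. rewrite IHl. ring. Qed.

Lemma fold_sm (g : nat -> R) k : fold_right Rplus 0 (map g (seq 1 k)) = sm g k.
Proof.
  induction k. reflexivity.
  rewrite seq_S, map_app, fold_right_app. simpl. rewrite fold_r_c, IHk.
  replace (1 + k)%nat with (S k) by lia. ring.
Qed.

Lemma sm_S f n : sm f (S n) = sm f n + f (S n).
Proof. reflexivity. Qed.

Lemma dsum (x : nat -> R) K :
  sm (fun k => sm (fun j => x j * x (S k - j)%nat) k) K =
  sm (fun j => x j * sm x (S K - j)%nat) K.
Proof.
  induction K. reflexivity.
  rewrite sm_S, IHK. cbv beta.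
  transitivity (sm (fun j => x j * sm x (S K - j)%nat + x j * x (S (S K) - j)%nat) (S K)).
  - rewrite sm_plus. rewrite (sm_S (fun j => x j * sm x (S K - j)%nat)). replace (S K - S K)%nat with 0%nat by lia. simpl. ring.
  - apply sm_ext. intros j Hj. replace (S (S K) - j)%nat with (S (S K - j)) by lia. simpl. ring.
Qed.

Lemma Qlist_S M k : (1 <= k)%nat -> Qlist M (S k) = Qlist M k ++
  ((fun t => - Iinf (fun s => fold_right Rplus 0
      (map (fun j => nth (j - 1) (Qlist M k) (fun _ => 0) s
                     * nth (k - j) (Qlist M k) (fun _ => 0) s) (seq 1 k))) t) :: nil).
Proof. intros H. destruct k. lia. reflexivity. Qed.

Lemma Qlist_len M k : length (Qlist M k) = k.
Proof.
  induction k. reflexivity. destruct k. reflexivity.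
  rewrite Qlist_S by lia. rewrite length_app, IHk. simpl. lia.
Qed.

Lemma Qlist_nth M k i : (i < k)%nat -> nth i (Qlist M k) (fun _ => 0) = Qk M (S i).
Proof.
  induction k; intros H. lia.
  destruct (Nat.eq_dec i k) as [->|Hne].
  - unfold Qk. f_equal. lia.
  - destruct k. lia. rewrite Qlist_S by lia. rewrite app_nth1. apply IHk; lia.
    rewrite Qlist_len; lia.
Qed.

Lemma Qk_S M k : (1 <= k)%nat -> Qk M (S k) =
  fun t => - Iinf (fun s => sm (fun j => Qk M j s * Qk M (S k - j) s) k) t.
Proof.
  intros Hk. unfold Qk at 1. replace (S k - 1)%nat with k by lia.
  rewrite Qlist_S by lia. rewrite app_nth2; rewrite Qlist_len; [|lia].
  rewrite Nat.sub_diag. simpl nth.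
  apply FunctionalExtensionality.functional_extensionality. intros t. f_equal. f_equal.
  apply FunctionalExtensionality.functional_extensionality. intros s.
  rewrite fold_sm. apply sm_ext. intros j Hj.
  rewrite !Qlist_nth by lia. f_equal; f_equal; f_equal; lia.
Qed.

Fixpoint xl (k : nat) : list R :=
  match k with
  | O => nil
  | S O => 36 :: nil
  | S k' => let l := xl k' in
      l ++ (2 / 1296 * fold_right Rplus 0
              (map (fun j => nth (j - 1) l 0 * nth (k' - j) l 0) (seq 1 k')) :: nil)
  end.

Definition xk (k : nat) : R := nth (k - 1) (xl k) 0.

Lemma xl_S k : (1 <= k)%nat -> xl (S k) = xl k ++
  (2 / 1296 * fold_right Rplus 0 (map (fun j => nth (j - 1) (xl k) 0 * nth (k - j) (xl k) 0) (seq 1 k)) :: nil).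
Proof. intros H. destruct k. lia. reflexivity. Qed.

Lemma xl_len k : length (xl k) = k.
Proof.
  induction k. reflexivity. destruct k. reflexivity.
  rewrite xl_S by lia. rewrite length_app, IHk. simpl. lia.
Qed.

Lemma xl_nth k i : (i < k)%nat -> nth i (xl k) 0 = xk (S i).
Proof.
  induction k; intros H. lia.
  destruct (Nat.eq_dec i k) as [->|Hne].
  - unfold xk. f_equal. lia.
  - destruct k. lia. rewrite xl_S by lia. rewrite app_nth1. apply IHk; lia.
    rewrite xl_len; lia.
Qed.

Lemma xk_S k : (1 <= k)%nat -> xk (S k) = 2 / 1296 * sm (fun j => xk j * xk (S k - j)) k.
Proof.
  intros Hk. unfold xk at 1. replace (S k - 1)%nat with k by lia.
  rewrite xl_S by lia. rewrite app_nth2; rewrite xl_len; [|lia].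
  rewrite Nat.sub_diag. simpl nth. f_equal.
  rewrite fold_sm. apply sm_ext. intros j Hj.
  rewrite !xl_nth by lia. f_equal; f_equal; lia.
Qed.

Lemma xk_1 : xk 1 = 36.
Proof. reflexivity. Qed.

Lemma xk_nonneg k : 0 <= xk k.
Proof.
  induction k as [k IH] using (well_founded_induction Wf_nat.lt_wf).
  destruct k. unfold xk. simpl. lra.
  destruct k. rewrite xk_1. lra.
  rewrite xk_S by lia. apply Rmult_le_pos. lra.
  apply sm_nonneg. intros j Hj. apply Rmult_le_pos; apply IH; lia.
Qed.

Lemma sm_mono_n f m n : (m <= n)%nat -> (forall j, 0 <= f j) -> sm f m <= sm f n.
Proof.
  intros H Hp. induction H. lra. simpl. pose proof (Hp (S m0)). lra.
Qed.

Lemma xk_sum K : sm xk K <= 39.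
Proof.
  induction K. simpl. lra.
  rewrite sm_shift, xk_1.
  rewrite (sm_ext _ (fun k => 2 / 1296 * sm (fun j => xk j * xk (S k - j)) k)).
  2: { intros j Hj. apply xk_S. lia. }
  rewrite sm_scal.
  assert (sm (fun k => sm (fun j => xk j * xk (S k - j)%nat) k) K <= sm xk K * sm xk K).
  { rewrite dsum.
    assert (E : sm xk K * sm xk K = sm (fun j => sm xk K * xk j) K) by (rewrite sm_scal; ring).
    rewrite E. apply sm_le. intros j Hj.
    rewrite Rmult_comm. apply Rmult_le_compat_r. apply xk_nonneg.
    apply sm_mono_n. lia. intros; apply xk_nonneg. }
  assert (0 <= sm xk K) by (apply sm_nonneg; intros; apply xk_nonneg).
  assert (sm xk K * sm xk K <= 39 * 39) by nra.
  lra.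
Qed.

Lemma sum_n_sm (c : nat -> R) N : sum_n c N = c 0%nat + sm c N.
Proof.
  induction N. rewrite sum_O. simpl. ring.
  rewrite sum_Sn, IHN. simpl. unfold plus; simpl. ring.
Qed.

Lemma series_bound (c : nat -> R) B : (forall n, 0 <= c n) -> (forall N, sum_n c N <= B) ->
  ex_series c /\ Series c <= B.
Proof.
  intros Hp Hb.
  destruct (ex_finite_lim_seq_incr (sum_n c) B) as [l Hl]; auto.
  { intros n. rewrite sum_Sn. unfold plus; simpl. pose proof (Hp (S n)). lra. }
  assert (Hs : is_series c l) by exact Hl.
  split. eexists; eauto.
  rewrite (is_series_unique c l Hs).
  pose proof (is_lim_seq_le (sum_n c) (fun _ => B) l B Hb Hl (is_lim_seq_const B)). simpl in H. auto.
Qed.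

Lemma series_split (a : nat -> R) B : (forall N, sm (fun n => Rabs (a n)) N <= B) ->
  ex_series a /\ Rabs (Series a - a 0%nat) <= B.
Proof.
  intros Hb.
  assert (Hab : forall N, sum_n (fun n => Rabs (a n)) N <= Rabs (a 0%nat) + B).
  { intros N. rewrite sum_n_sm. specialize (Hb N). lra. }
  destruct (series_bound (fun n => Rabs (a n)) _ (fun n => Rabs_pos _) Hab) as [Hex _].
  assert (Hexa : ex_series a) by (apply ex_series_Rabs; auto).
  split; auto.
  rewrite Series_incr_1 by auto.
  replace (a 0%nat + Series (fun k => a (S k)) - a 0%nat) with (Series (fun k => a (S k))) by ring.
  assert (Hb2 : forall N, sum_n (fun k => Rabs (a (S k))) N <= B).
  { intros N. rewrite sum_n_sm. specialize (Hb (S N)). rewrite sm_shift in Hb. lra. }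
  destruct (series_bound (fun k => Rabs (a (S k))) B (fun n => Rabs_pos _) Hb2) as [Hex2 Hle].
  eapply Rle_trans. apply Series_Rabs; auto. auto.
Qed.


Lemma gen_pts f a l (eps : posreal) : is_RInt_gen f (at_point a) pinf l ->
  exists M0, forall y, M0 < y -> ex_RInt f a y /\ Rabs (RInt f a y - l) < eps.
Proof.
  intros Hl. destruct (Hl (ball l eps) (locally_ball l eps)) as [Q R HQ [M HR] Himp].
  exists M. intros y Hy. destruct (Himp a y HQ (HR y Hy)) as [v [Hv Hb]]. simpl in Hv.
  split. eexists; eauto. rewrite (is_RInt_unique f a y v Hv). apply ballR; auto.
Qed.

Lemma gen_shift f a x : a <= x -> 0 < x -> cont_on f ->
  ex_RInt_gen f (at_point a) pinf -> ex_RInt_gen f (at_point x) pinf.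
Proof.
  intros Hax Hx Hc [l Hl].
  destruct (gen_pts f a l (mkposreal 1 Rlt_0_1) Hl) as [M0 HM0].
  assert (Hfx : ex_RInt f a x).
  { destruct (HM0 (Rmax M0 x + 1)) as [He _]. pose proof (Rmax_l M0 x); lra.
    apply (@ex_RInt_Chasles_1 R_CompleteNormedModule f a x (Rmax M0 x + 1)); auto.
    pose proof (Rmax_r M0 x); lra. }
  exists (l - RInt f a x). apply Iinf_of_lim; auto.
  apply filterlim_locally. intros eps.
  destruct (gen_pts f a l eps Hl) as [M1 HM1].
  exists (Rmax M1 x). intros y Hy.
  pose proof (Rmax_l M1 x). pose proof (Rmax_r M1 x).
  destruct (HM1 y) as [He Hb]. lra.
  apply ballR.
  assert (Hxy : ex_RInt f x y) by (apply (@ex_RInt_Chasles_2 R_CompleteNormedModule f a x y); auto; lra).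
  pose proof (@RInt_Chasles R_CompleteNormedModule f a x y Hfx Hxy) as E.
  change (plus (RInt f a x) (RInt f x y)) with (RInt f a x + RInt f x y) in E.
  replace (RInt f x y - (l - RInt f a x)) with (RInt f a y - l) by lra. auto.
Qed.

Lemma cont_of_within (M : R -> R) :
  (forall t, 0 <= t -> filterlim M (within (fun x => 0 <= x) (locally t)) (locally (M t))) ->
  cont_on M.
Proof.
  intros H t Ht P HP. specialize (H t (Rlt_le _ _ Ht) P HP). unfold within in H. simpl in H.
  unfold filtermap in *.
  assert (Hl : locally t (fun x => 0 <= x)).
  { exists (mkposreal t Ht). intros y Hy. apply ballR in Hy. apply Rabs_def2 in Hy. unfold minus, plus, opp in Hy; simpl in Hy. lra. }
  apply (filter_imp (fun x => (0 <= x -> P (M x)) /\ 0 <= x)). tauto.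
  apply filter_and; auto.
Qed.

Section Qanal.
Variable M : R -> R.
Variable T : R.
Hypothesis HMc : cont_on M.
Hypothesis HexM : forall t, 0 <= t -> ex_RInt_gen M (at_point t) pinf.
Hypothesis HexMM : forall s, 0 <= s -> ex_RInt_gen (Iinf M) (at_point s) pinf.
Hypothesis HM3b : forall t, 0 <= t -> ex_RInt_gen (fun s => (Iinf M s) ^ 2) (at_point t) pinf.
Hypothesis HM3c : ex_RInt_gen (fun t => Iinf (fun s => (Iinf M s) ^ 2) t) (at_point 0) pinf.
Hypothesis HT0 : 0 < T.
Hypothesis HT : forall t, T <= t -> Rabs (Iinf (Qk M 1) t) <= 1 /\ phi M t <= / 6 ^ 4.

Definition Q1 := fun t => - Iinf M t.
Definition A := fun t => Iinf (fun s => (Iinf M s) ^ 2) t.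
Definition Pf := Iinf Q1.

Lemma Qk1 : Qk M 1 = Q1.
Proof. reflexivity. Qed.

Lemma cont_IM : cont_on (Iinf M).
Proof. apply (Iinf_cont M 1); auto; try lra. apply HexM; lra. Qed.

Lemma cont_Q1 : cont_on Q1.
Proof. intros x Hx. apply cR_opp. apply cont_IM; auto. Qed.

Lemma cont_IM2 : cont_on (fun s => (Iinf M s) ^ 2).
Proof. intros x Hx. simpl. apply cR_mult. apply cont_IM; auto.
  apply cR_mult. apply cont_IM; auto. apply cR_const. Qed.

Lemma cont_A : cont_on A.
Proof. apply (Iinf_cont _ 1); auto; try lra. apply cont_IM2. apply HM3b; lra. Qed.

Lemma A_nonneg t : 0 <= t -> 0 <= A t.
Proof. intros Ht. apply Iinf_nonneg. apply HM3b; auto. intros; apply pow2_ge_0. Qed.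

Lemma A_mono s t : 0 < s -> s <= t -> A t <= A s.
Proof. intros Hs Hst. apply (RInt_le_Iinf _ s t cont_IM2); auto. apply HM3b; lra.
  intros; apply pow2_ge_0. Qed.

Lemma exA t : 0 < t -> ex_RInt_gen A (at_point t) pinf.
Proof. intros Ht. apply (gen_shift A 0 t); auto; try lra. apply cont_A. Qed.

Lemma Qk2 : Qk M 2 = fun t => - A t.
Proof.
  rewrite Qk_S by lia. apply FunctionalExtensionality.functional_extensionality. intros t.
  f_equal. unfold A. f_equal.
  apply FunctionalExtensionality.functional_extensionality. intros s.
  simpl. rewrite Qk1. unfold Q1. ring.
Qed.

Lemma exP t : 0 <= t -> ex_RInt_gen Q1 (at_point t) pinf /\ Pf t = - Iinf (Iinf M) t.
Proof. intros Ht. apply Iinf_opp. apply HexMM; auto. Qed.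

Lemma cont_P : cont_on Pf.
Proof. apply (Iinf_cont _ 1); try lra. apply cont_Q1. apply exP; lra. Qed.

Lemma der_P x : 0 < x -> is_derive Pf x (- Q1 x).
Proof. intros Hx. apply (Iinf_derive _ 1); try lra; auto. apply cont_Q1. apply exP; lra. Qed.

Lemma P_le1 t : T <= t -> Rabs (Pf t) <= 1.
Proof. intros H. apply (HT t H). Qed.

Lemma phiA t : 0 < t -> phi M t = Iinf A t.
Proof.
  intros Ht. unfold phi. rewrite Qk2. rewrite (proj2 (Iinf_opp A t (exA t Ht))). ring.
Qed.

Lemma IA_small t : T <= t -> Iinf A t <= / 1296.
Proof. intros H. rewrite <- phiA by lra. replace 1296 with (6 ^ 4) by ring. apply (HT t H). Qed.


Lemma Q1sq : (fun s => Q1 s * Q1 s) = (fun s => (Iinf M s) ^ 2).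
Proof. apply FunctionalExtensionality.functional_extensionality. intros s. unfold Q1. ring. Qed.

Lemma IQ1sq t : 0 <= t -> ex_RInt_gen (fun s => Q1 s * Q1 s) (at_point t) pinf /\
  Iinf (fun s => Q1 s * Q1 s) t = A t.
Proof. intros Ht. rewrite Q1sq. split. apply HM3b; auto. reflexivity. Qed.

Lemma cont_A2 : cont_on (fun s => A s * A s).
Proof. intros x Hx. apply cR_mult; apply cont_A; auto. Qed.

Lemma cont_QA : cont_on (fun s => Rabs (Q1 s) * A s).
Proof. intros x Hx. apply cR_mult. apply cR_abs, cont_Q1; auto. apply cont_A; auto. Qed.

Lemma IA2 t : T <= t -> ex_RInt_gen (fun s => A s * A s) (at_point t) pinf /\
  Iinf (fun s => A s * A s) t <= A t / 1296.
Proof.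
  intros Ht.
  destruct (Iinf_scal (A t) A t (exA t ltac:(lra))) as [He Hv].
  destruct (Iinf_dom (fun s => A s * A s) (fun s => A t * A s) t cont_A2) as [He2 Hb]; auto; try lra.
  - intros x Hx. apply cR_scal, cont_A; auto.
  - intros x Hx. pose proof (A_mono t x ltac:(lra) Hx). pose proof (A_nonneg x ltac:(lra)).
    rewrite Rabs_pos_eq by nra. nra.
  - split; auto. pose proof (Rle_abs (Iinf (fun s => A s * A s) t)).
    pose proof (IA_small t Ht). pose proof (A_nonneg t ltac:(lra)). rewrite Hv in Hb. nra.
Qed.

Lemma IQA t : T <= t -> ex_RInt_gen (fun s => Rabs (Q1 s) * A s) (at_point t) pinf /\
  Iinf (fun s => Rabs (Q1 s) * A s) t <= A t / 36.
Proof.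
  intros Ht.
  destruct (IQ1sq t ltac:(lra)) as [E1 V1]. destruct (IA2 t Ht) as [E2 V2].
  destruct (Iinf_scal (/72) _ t E1) as [E3 V3].
  destruct (Iinf_scal 18 _ t E2) as [E4 V4].
  destruct (Iinf_plus _ _ t E3 E4) as [E5 V5].
  destruct (Iinf_dom (fun s => Rabs (Q1 s) * A s) (fun s => / 72 * (Q1 s * Q1 s) + 18 * (A s * A s)) t cont_QA) as [He Hb]; auto; try lra.
  - intros x Hx. apply cR_plus; apply cR_scal. apply cR_mult; apply cont_Q1; auto. apply cont_A2; auto.
  - intros x Hx. pose proof (A_nonneg x ltac:(lra)). rewrite Rabs_pos_eq.
    2: apply Rmult_le_pos; auto; apply Rabs_pos.
    assert (Q1 x * Q1 x = Rabs (Q1 x) * Rabs (Q1 x)). { rewrite <- Rabs_mult. rewrite Rabs_pos_eq. auto. nra. }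
    rewrite H0. pose proof (pow2_ge_0 (Rabs (Q1 x) - 36 * A x)). nra.
  - split; auto. pose proof (Rle_abs (Iinf (fun s => Rabs (Q1 s) * A s) t)).
    rewrite V5, V3, V4, V1 in Hb. lra.
Qed.

Definition Hf := fun s => 36 * (Rabs (Q1 s) * A s) + 1296 * (A s * A s).

Lemma cont_H : cont_on Hf.
Proof. intros x Hx. unfold Hf. apply cR_plus; apply cR_scal. apply cont_QA; auto. apply cont_A2; auto. Qed.

Lemma IHint t : T <= t -> ex_RInt_gen Hf (at_point t) pinf /\ Iinf Hf t <= 2 * A t.
Proof.
  intros Ht. destruct (IQA t Ht) as [E1 V1]. destruct (IA2 t Ht) as [E2 V2].
  destruct (Iinf_scal 36 _ t E1) as [E3 V3].
  destruct (Iinf_scal 1296 _ t E2) as [E4 V4].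
  destruct (Iinf_plus _ _ t E3 E4) as [E5 V5].
  split. exact E5. unfold Hf. rewrite V5, V3, V4. lra.
Qed.

Lemma H_nonneg s : 0 <= s -> 0 <= Hf s.
Proof. intros Hs. unfold Hf. pose proof (A_nonneg s Hs). pose proof (Rabs_pos (Q1 s)).
  apply Rplus_le_le_0_compat; apply Rmult_le_pos; try lra; apply Rmult_le_pos; lra. Qed.


Lemma sm_cont (F : nat -> R -> R) n x : (forall j, (1 <= j <= n)%nat -> continuous (F j) x) ->
  continuous (fun s => sm (fun j => F j s) n) x.
Proof.
  induction n; intros H; simpl. apply cR_const.
  apply cR_plus. apply IHn. intros; apply H; lia. apply H; lia.
Qed.

Lemma xk2 : xk 2 = 2.
Proof. rewrite xk_S by lia. simpl. rewrite xk_1. lra. Qed.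

Lemma pair_bound j l s : T <= s -> (1 <= j)%nat -> (1 <= l)%nat -> (3 <= j + l)%nat ->
  ((j = 1%nat /\ Rabs (Qk M j s) = Rabs (Q1 s)) \/ ((2 <= j)%nat /\ Rabs (Qk M j s) <= xk j * A s)) ->
  ((l = 1%nat /\ Rabs (Qk M l s) = Rabs (Q1 s)) \/ ((2 <= l)%nat /\ Rabs (Qk M l s) <= xk l * A s)) ->
  Rabs (Qk M j s * Qk M l s) <= xk j * xk l * Hf s / 1296.
Proof.
  intros Hs Hj Hl Hjl Yj Yl. rewrite Rabs_mult.
  pose proof (A_nonneg s ltac:(lra)) as HA. pose proof (Rabs_pos (Q1 s)) as HQ.
  pose proof (xk_nonneg j) as Xj. pose proof (xk_nonneg l) as Xl.
  pose proof (Rabs_pos (Qk M j s)) as Pj. pose proof (Rabs_pos (Qk M l s)) as Pl.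
  unfold Hf.
  destruct Yj as [[-> Ej]|[Hj2 Bj]]; destruct Yl as [[-> El]|[Hl2 Bl]]; try lia.
  - rewrite xk_1, Ej.
    assert (Rabs (Q1 s) * Rabs (Qk M l s) <= Rabs (Q1 s) * (xk l * A s)) by (apply Rmult_le_compat_l; auto).
    assert (0 <= xk l * (A s * A s)) by (apply Rmult_le_pos; nra). nra.
  - rewrite xk_1, El.
    assert (Rabs (Qk M j s) * Rabs (Q1 s) <= (xk j * A s) * Rabs (Q1 s)) by (apply Rmult_le_compat_r; auto).
    assert (0 <= xk j * (A s * A s)) by (apply Rmult_le_pos; nra). nra.
  - assert (Rabs (Qk M j s) * Rabs (Qk M l s) <= (xk j * A s) * (xk l * A s)) by (apply Rmult_le_compat; auto).
    assert (0 <= xk j * xk l * (Rabs (Q1 s) * A s)) by (apply Rmult_le_pos; [nra| nra]). nra.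
Qed.

Lemma Qk_bound k : (2 <= k)%nat -> cont_on (Qk M k) /\ forall t, T <= t -> Rabs (Qk M k t) <= xk k * A t.
Proof.
  induction k as [k IH] using (well_founded_induction Wf_nat.lt_wf). intros Hk.
  destruct (Nat.eq_dec k 2) as [->|Hk2].
  { rewrite Qk2. split. intros x Hx. apply cR_opp, cont_A; auto.
    intros t Ht. rewrite xk2, Rabs_Ropp, Rabs_pos_eq. pose proof (A_nonneg t ltac:(lra)). lra. apply A_nonneg; lra. }
  destruct k as [|k']. lia.
  assert (Hk' : (2 <= k')%nat) by lia.
  assert (Hcj : forall j, (1 <= j <= k')%nat -> cont_on (Qk M j)).
  { intros j Hj. destruct (Nat.eq_dec j 1) as [->|]. rewrite Qk1. apply cont_Q1. apply (proj1 (IH j ltac:(lia) ltac:(lia))). }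
  assert (Hy : forall j s, (1 <= j <= k')%nat -> T <= s ->
    (j = 1%nat /\ Rabs (Qk M j s) = Rabs (Q1 s)) \/ ((2 <= j)%nat /\ Rabs (Qk M j s) <= xk j * A s)).
  { intros j s Hj Hs. destruct (Nat.eq_dec j 1) as [->|]. left. rewrite Qk1. auto.
    right. split. lia. apply (proj2 (IH j ltac:(lia) ltac:(lia))); auto. }
  set (g := fun s => sm (fun j => Qk M j s * Qk M (S k' - j) s) k').
  assert (Hgc : cont_on g).
  { intros x Hx. unfold g. apply (sm_cont (fun j s => Qk M j s * Qk M (S k' - j) s)).
    intros j Hj. apply cR_mult; [apply Hcj | apply Hcj]; auto; lia. }
  assert (Hgd : forall t, T <= t -> forall s, t <= s -> Rabs (g s) <= xk (S k') / 2 * Hf s).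
  { intros t Ht s Hs. unfold g. eapply Rle_trans. apply sm_abs.
    eapply Rle_trans. apply (sm_le _ (fun j => xk j * xk (S k' - j) * Hf s / 1296)).
    intros j Hj. apply pair_bound; try lia; try lra. apply Hy; lia || lra. apply Hy; lia || lra.
    rewrite xk_S by lia. right.
    transitivity (Hf s / 1296 * sm (fun j => xk j * xk (S k' - j)) k').
    rewrite <- sm_scal. apply sm_ext. intros; field. field. }
  assert (Hex : forall t, T <= t -> ex_RInt_gen g (at_point t) pinf /\ Rabs (Iinf g t) <= xk (S k') * A t).
  { intros t Ht. destruct (IHint t Ht) as [EH VH].
    destruct (Iinf_scal (xk (S k') / 2) Hf t EH) as [ES VS].
    destruct (Iinf_dom g (fun s => xk (S k') / 2 * Hf s) t Hgc) as [Eg Vg].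
    intros x Hx; apply cR_scal, cont_H; auto. lra. apply Hgd; auto. exact ES.
    split; auto. rewrite VS in Vg. pose proof (xk_nonneg (S k')). nra. }
  assert (HQ : Qk M (S k') = fun t => - Iinf g t) by (rewrite Qk_S by lia; reflexivity).
  split.
  - rewrite HQ. intros x Hx. apply cR_opp. apply (Iinf_cont g T); auto. apply Hex; lra.
  - intros t Ht. rewrite HQ, Rabs_Ropp. apply Hex; auto.
Qed.


Lemma b_decomp t : T <= t -> Rabs (bfun M t - Q1 t) <= 3 * A t.
Proof.
  intros Ht. unfold bfun.
  assert (HB : forall N, sm (fun n => Rabs (Qk M (S n) t)) N <= 3 * A t).
  { intros N. eapply Rle_trans. apply (sm_le _ (fun n => A t * xk (S n))).
    intros j Hj. rewrite Rmult_comm. apply Qk_bound; auto; lia.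
    rewrite sm_scal. pose proof (xk_sum (S N)). rewrite sm_shift, xk_1 in H.
    pose proof (A_nonneg t ltac:(lra)). nra. }
  destruct (series_split (fun n => Qk M (S n) t) _ HB) as [_ Hb]. exact Hb.
Qed.

End Qanal.

Lemma dR_plus (f g : R -> R) x df dg : is_derive f x df -> is_derive g x dg ->
  is_derive (fun y => f y + g y) x (df + dg).
Proof. intros. apply (@is_derive_plus R_AbsRing R_NormedModule f g x df dg); auto. Qed.
Lemma dR_minus (f g : R -> R) x df dg : is_derive f x df -> is_derive g x dg ->
  is_derive (fun y => f y - g y) x (df - dg).
Proof. intros. apply (@is_derive_minus R_AbsRing R_NormedModule f g x df dg); auto. Qed.
Lemma dR_mult (f g : R -> R) x df dg : is_derive f x df -> is_derive g x dg ->
  is_derive (fun y => f y * g y) x (df * g x + f x * dg).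
Proof. intros. apply (@is_derive_mult R_AbsRing f g x df dg); auto. intros; apply Rmult_comm. Qed.
Lemma dR_ln (f : R -> R) x df : is_derive f x df -> 0 < f x ->
  is_derive (fun y => ln (f y)) x (df / f x).
Proof. intros H Hp. pose proof (@is_derive_comp R_AbsRing R_NormedModule ln f x (/ f x) df (is_derive_ln _ Hp) H).
  unfold Rdiv. exact H0. Qed.
Lemma dR_exp (f : R -> R) x df : is_derive f x df ->
  is_derive (fun y => exp (f y)) x (df * exp (f x)).
Proof. intros H. exact (@is_derive_comp R_AbsRing R_NormedModule exp f x (exp (f x)) df (is_derive_exp _) H). Qed.
Lemma dR_eq (f : R -> R) (x l l' : R) : is_derive f x l -> l = l' -> is_derive f x l'.
Proof. intros H <-; auto. Qed.

Lemma dR_div (f g : R -> R) x df dg : is_derive f x df -> is_derive g x dg -> g x <> 0 ->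
  is_derive (fun y => f y / g y) x ((df * g x - f x * dg) / (g x) ^ 2).
Proof. intros Hf Hg Hn.
  pose proof (dR_mult f (fun y => / g y) x df _ Hf (is_derive_inv g x dg Hg Hn)).
  eapply dR_eq. exact H. cbv beta. field. auto. Qed.

Lemma dR_const (c : R) x : is_derive (fun _ => c) x 0.
Proof. apply (@is_derive_const R_AbsRing R_NormedModule). Qed.

Lemma dR_id x : is_derive (fun y : R => y) x 1.
Proof. apply (@is_derive_id R_AbsRing). Qed.

Lemma dR_scal c (f : R -> R) x df : is_derive f x df -> is_derive (fun y => c * f y) x (c * df).
Proof. apply is_derive_scal. Qed.

Lemma dR_sq (f : R -> R) x df : is_derive f x df -> is_derive (fun y => f y ^ 2) x (2 * f x * df).
Proof. intros H. eapply dR_eq. eapply is_derive_ext. 2: apply (dR_mult f f x df df H H).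
  intros; simpl; ring. ring. Qed.

Lemma cont_of_der (f : R -> R) x df : is_derive f x df -> continuous f x.
Proof. intros H. apply (@ex_derive_continuous R_AbsRing R_NormedModule). eexists; eauto. Qed.

Lemma mono_closed (f df : R -> R) u t : u <= t ->
  (forall y, u <= y <= t -> is_derive f y (df y)) ->
  (forall y, u <= y <= t -> df y <= 0) -> f t <= f u.
Proof.
  intros Hut Hd Hn. destruct (Req_dec u t) as [->|Hne]. lra.
  destruct (MVT_gen f u t df) as [c [Hc E]].
  - intros y Hy. rewrite Rmin_left, Rmax_right in Hy by lra. apply Hd; lra.
  - intros y Hy. rewrite Rmin_left, Rmax_right in Hy by lra.
    apply continuity_pt_filterlim. apply (cont_of_der f y (df y)). apply Hd; lra.
  - rewrite Rmin_left, Rmax_right in Hc by lra.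
    pose proof (Hn c Hc). nra.
Qed.

Lemma alg_bound (a b1 c d be Q P x : R) :
  0 < a^2 + b1^2 + c^2 + d^2 -> 0 <= x -> Rabs P <= 1 ->
  let p := a^2 + b1^2 in let E := a^2 + b1^2 + c^2 + d^2 in
  let dp := 2 * a * (-2 * be * a - x * d) + 2 * b1 * (-2 * be * b1 + x * c) in
  Rabs ((-4 * be * p) / E - 4 * ((- Q) * (p / E) + P * ((dp * E - p * (-4 * be * p)) / E ^ 2)))
  <= 4 * Rabs (be - Q) + 4 * Rabs P * (Rabs be + x).
Proof.
  intros HE Hx HP p E dp.
  assert (HE' : 0 < E) by (unfold E; lra).
  assert (Hp : 0 <= p <= E) by (unfold p, E; nra).
  pose (th := p / E). pose (w := (b1 * c - a * d) / E).
  assert (Hthe : th * E = p) by (unfold th; field; lra).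
  assert (Hwe : w * E = b1 * c - a * d) by (unfold w; field; lra).
  assert (Hth : 0 <= th <= 1) by (split; nra).
  assert (Hw2 : Rabs (2 * (b1 * c - a * d)) <= E).
  { apply Rabs_le. unfold E. pose proof (pow2_ge_0 (b1 + c)). pose proof (pow2_ge_0 (a - d)).
    pose proof (pow2_ge_0 (b1 - c)). pose proof (pow2_ge_0 (a + d)). split; nra. }
  assert (Hw : Rabs (2 * w) <= 1).
  { assert (Rabs (2 * w) * E = Rabs (2 * (b1 * c - a * d))).
    { rewrite <- Hwe. rewrite <- (Rabs_pos_eq E) at 1 by lra. rewrite <- Rabs_mult. f_equal. ring. }
    pose proof (Rabs_pos (2 * w)). nra. }
  assert (Eq : (-4 * be * p) / E - 4 * ((- Q) * (p / E) + P * ((dp * E - p * (-4 * be * p)) / E ^ 2))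
            = -4 * (be - Q) * th - 4 * P * (-4 * be * (th * (1 - th)) + x * (2 * w))).
  { unfold th, w, dp, p, E. field. unfold E, p in HE'. lra. }
  rewrite Eq.
  assert (H1 : Rabs (-4 * (be - Q) * th) <= 4 * Rabs (be - Q)).
  { rewrite !Rabs_mult. rewrite (Rabs_pos_eq th) by lra. replace (Rabs (-4)) with 4 by (rewrite Rabs_left; lra).
    pose proof (Rabs_pos (be - Q)). nra. }
  assert (H2 : Rabs (-4 * be * (th * (1 - th)) + x * (2 * w)) <= Rabs be + x).
  { eapply Rle_trans. apply Rabs_triang.
    assert (E1 : Rabs (-4 * be * (th * (1 - th))) = 4 * Rabs be * (th * (1 - th))).
    { rewrite Rabs_mult. rewrite (Rabs_pos_eq (th * (1 - th))) by nra. rewrite Rabs_mult.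
      replace (Rabs (-4)) with 4 by (rewrite Rabs_left; lra). ring. }
    assert (E2 : Rabs (x * (2 * w)) = x * Rabs (2 * w)).
    { rewrite Rabs_mult, (Rabs_pos_eq x) by lra. ring. }
    rewrite E1, E2.
    pose proof (Rabs_pos be). assert (th * (1 - th) <= / 4) by (pose proof (pow2_ge_0 (th - / 2)); nra).
    assert (Rabs be * (th * (1 - th)) <= Rabs be * / 4) by (apply Rmult_le_compat_l; lra).
    assert (x * Rabs (2 * w) <= x * 1) by (apply Rmult_le_compat_l; lra). lra. }
  eapply Rle_trans. apply Rabs_triang. rewrite Rabs_Ropp.
  rewrite (Rabs_mult (4 * P)), (Rabs_mult 4), (Rabs_pos_eq 4) by lra.
  pose proof (Rabs_pos P). pose proof (Rabs_pos (-4 * be * (th * (1 - th)) + x * (2 * w))). nra.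
Qed.

Section Energy.
Variables (a b1 c d bb Q P h : R -> R) (x u t B T0 : R).
Hypothesis Hut : u <= t.
Hypothesis Hx : 0 <= x.
Hypothesis HT0u : T0 < u.
Hypothesis Ha : forall y, u <= y <= t -> is_derive a y (-2 * bb y * a y - x * d y).
Hypothesis Hb : forall y, u <= y <= t -> is_derive b1 y (-2 * bb y * b1 y + x * c y).
Hypothesis Hc : forall y, u <= y <= t -> is_derive c y (- x * b1 y).
Hypothesis Hd : forall y, u <= y <= t -> is_derive d y (x * a y).
Hypothesis HPd : forall y, u <= y <= t -> is_derive P y (- Q y).
Hypothesis HP1 : forall y, u <= y <= t -> Rabs (P y) <= 1.
Hypothesis Hh : forall y, T0 < y -> continuous h y.
Hypothesis Hhb : forall y, u <= y <= t -> 4 * Rabs (bb y - Q y) + 4 * Rabs (P y) * (Rabs (bb y) + x) <= h y.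
Hypothesis HB : forall y, u <= y <= t -> Rabs (bb y) <= B.

Definition En y := a y ^ 2 + b1 y ^ 2 + c y ^ 2 + d y ^ 2.

Lemma En_nonneg y : 0 <= En y.
Proof. unfold En. pose proof (pow2_ge_0 (a y)). pose proof (pow2_ge_0 (b1 y)).
  pose proof (pow2_ge_0 (c y)). pose proof (pow2_ge_0 (d y)). lra. Qed.

Lemma dEn y : u <= y <= t -> is_derive En y (-4 * bb y * (a y ^ 2 + b1 y ^ 2)).
Proof.
  intros Hy. unfold En. eapply dR_eq.
  apply dR_plus. apply dR_plus. apply dR_plus.
  apply dR_sq, Ha, Hy. apply dR_sq, Hb, Hy. apply dR_sq, Hc, Hy. apply dR_sq, Hd, Hy.
  ring.
Qed.

Lemma En_zero : En u = 0 -> En t = 0.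
Proof.
  intros H0.
  assert (Hm : En t * exp (-4 * B * t) <= En u * exp (-4 * B * u)).
  { apply (mono_closed (fun y => En y * exp (-4 * B * y))
      (fun y => -4 * bb y * (a y ^ 2 + b1 y ^ 2) * exp (-4 * B * y) + En y * ((-4 * B * 1) * exp (-4 * B * y)))); auto.
    - intros y Hy. apply (dR_mult En (fun z => exp (-4 * B * z))). apply dEn; auto. apply (dR_exp (fun z => -4 * B * z)). apply (dR_scal (-4 * B) (fun z => z)). apply dR_id.
    - intros y Hy. pose proof (exp_pos (-4 * B * y)). pose proof (HB y Hy).
      pose proof (Rabs_Ropp (bb y)). pose proof (Rle_abs (- bb y)).
      assert (0 <= a y ^ 2 + b1 y ^ 2) by (pose proof (pow2_ge_0 (a y)); pose proof (pow2_ge_0 (b1 y)); lra).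
      assert (a y ^ 2 + b1 y ^ 2 <= En y) by (unfold En; pose proof (pow2_ge_0 (c y)); pose proof (pow2_ge_0 (d y)); lra).
      assert (- bb y <= B) by lra.
      assert (- bb y * (a y ^ 2 + b1 y ^ 2) <= B * (a y ^ 2 + b1 y ^ 2)) by (apply Rmult_le_compat_r; lra).
      assert (B * (a y ^ 2 + b1 y ^ 2) <= B * En y) by (apply Rmult_le_compat_l; [pose proof (Rabs_pos (bb y)); lra | lra]).
      assert (-4 * bb y * (a y ^ 2 + b1 y ^ 2) - 4 * B * En y <= 0) by lra.
      assert (-4 * bb y * (a y ^ 2 + b1 y ^ 2) * exp (-4 * B * y) + En y * (-4 * B * 1 * exp (-4 * B * y))
        = (-4 * bb y * (a y ^ 2 + b1 y ^ 2) - 4 * B * En y) * exp (-4 * B * y)) as EQ by ring.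
      rewrite EQ. apply Rmult_le_0_r; lra. }
  rewrite H0 in Hm. pose proof (exp_pos (-4 * B * t)). pose proof (En_nonneg t).
  assert (En t * exp (-4 * B * t) <= 0) by lra. nra.
Qed.

Lemma En_pos : 0 < En u -> forall y, u <= y <= t -> 0 < En y.
Proof.
  intros H0 y Hy.
  assert (Hm : - (En y * exp (4 * B * y)) <= - (En u * exp (4 * B * u))).
  { apply (mono_closed (fun z => - (En z * exp (4 * B * z)))
      (fun z => - (-4 * bb z * (a z ^ 2 + b1 z ^ 2) * exp (4 * B * z) + En z * ((4 * B * 1) * exp (4 * B * z))))); try lra.
    - intros z Hz. apply (@is_derive_opp R_AbsRing R_NormedModule).
      apply (dR_mult En (fun z => exp (4 * B * z))). apply dEn; lra. apply (dR_exp (fun z => 4 * B * z)). apply (dR_scal (4 * B) (fun z => z)). apply dR_id.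
    - intros z Hz. assert (Hz' : u <= z <= t) by lra.
      pose proof (exp_pos (4 * B * z)). pose proof (HB z Hz').
      pose proof (Rle_abs (bb z)).
      assert (0 <= a z ^ 2 + b1 z ^ 2) by (pose proof (pow2_ge_0 (a z)); pose proof (pow2_ge_0 (b1 z)); lra).
      assert (a z ^ 2 + b1 z ^ 2 <= En z) by (unfold En; pose proof (pow2_ge_0 (c z)); pose proof (pow2_ge_0 (d z)); lra).
      assert (bb z * (a z ^ 2 + b1 z ^ 2) <= B * (a z ^ 2 + b1 z ^ 2)) by (apply Rmult_le_compat_r; lra).
      assert (B * (a z ^ 2 + b1 z ^ 2) <= B * En z) by (apply Rmult_le_compat_l; [pose proof (Rabs_pos (bb z)); lra | lra]).
      assert (0 <= -4 * bb z * (a z ^ 2 + b1 z ^ 2) + 4 * B * En z) by lra.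
      assert (- (-4 * bb z * (a z ^ 2 + b1 z ^ 2) * exp (4 * B * z) + En z * (4 * B * 1 * exp (4 * B * z)))
        = - ((-4 * bb z * (a z ^ 2 + b1 z ^ 2) + 4 * B * En z) * exp (4 * B * z))) as EQ by ring.
      assert (NN : 0 <= -4 * bb z * (a z ^ 2 + b1 z ^ 2) + 4 * B * En z) by lra.
      rewrite EQ. pose proof (Rmult_le_pos _ _ NN (Rlt_le _ _ (exp_pos (4 * B * z)))). lra. }
  pose proof (exp_pos (4 * B * u)). pose proof (exp_pos (4 * B * y)).
  assert (0 < En u * exp (4 * B * u)) by nra.
  pose proof (En_nonneg y).
  destruct (Req_dec (En y) 0) as [E|E]. rewrite E in Hm. lra. lra.
Qed.


Lemma dRInt y : T0 < y -> is_derive (fun z => RInt h u z) y (h y).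
Proof.
  intros Hy. apply (is_derive_RInt h (fun z => RInt h u z) u y).
  - assert (He : 0 < y - T0) by lra. exists (mkposreal _ He). intros b Hbb.
    apply (@RInt_correct R_CompleteNormedModule h).
    apply (@ex_RInt_continuous R_CompleteNormedModule). intros z Hz. apply Hh.
    apply ballR in Hbb. apply Rabs_def2 in Hbb. unfold minus, plus, opp in Hbb; simpl in Hbb.
    destruct Hz as [Hz _]. unfold Rmin in Hz. destruct (Rle_dec u b); lra.
  - apply Hh; auto.
Qed.

Lemma th_bound y : 0 < En y -> 0 <= (a y ^ 2 + b1 y ^ 2) / En y <= 1.
Proof.
  intros HE. assert (0 <= a y ^ 2 + b1 y ^ 2 <= En y).
  { unfold En. pose proof (pow2_ge_0 (a y)). pose proof (pow2_ge_0 (b1 y)).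
    pose proof (pow2_ge_0 (c y)). pose proof (pow2_ge_0 (d y)). lra. }
  split. apply Rdiv_le_0_compat; lra.
  apply Rmult_le_reg_r with (En y); auto. unfold Rdiv. rewrite Rmult_assoc, Rinv_l by lra. lra.
Qed.

Lemma En_log : 0 < En u ->
  ln (En t) - ln (En u) <= RInt h u t + 8 /\ ln (En u) - ln (En t) <= RInt h u t + 8.
Proof.
  intros H0.
  pose proof (En_pos H0) as Hpos.
  set (G := fun y => ln (En y) - 4 * (P y * ((a y ^ 2 + b1 y ^ 2) / En y))).
  set (dG := fun y => (-4 * bb y * (a y ^ 2 + b1 y ^ 2)) / En y - 4 * ((- Q y) * ((a y ^ 2 + b1 y ^ 2) / En y) +
      P y * (((2 * a y * (-2 * bb y * a y - x * d y) + 2 * b1 y * (-2 * bb y * b1 y + x * c y)) * En y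
              - (a y ^ 2 + b1 y ^ 2) * (-4 * bb y * (a y ^ 2 + b1 y ^ 2))) / En y ^ 2))).
  assert (HdG : forall y, u <= y <= t -> is_derive G y (dG y)).
  { intros y Hy. unfold G, dG.
    apply (dR_minus (fun z => ln (En z)) (fun z => 4 * (P z * ((a z ^ 2 + b1 z ^ 2) / En z)))).
    apply (dR_ln En). apply dEn; auto. apply Hpos; auto.
    apply (dR_scal 4 (fun z => P z * ((a z ^ 2 + b1 z ^ 2) / En z))).
    apply (dR_mult P (fun z => (a z ^ 2 + b1 z ^ 2) / En z)). apply HPd; auto.
    apply (dR_div (fun z => a z ^ 2 + b1 z ^ 2) En). apply (dR_plus (fun z => a z ^ 2) (fun z => b1 z ^ 2)); apply dR_sq. apply Ha; auto. apply Hb; auto.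
    apply dEn; auto. pose proof (Hpos y Hy); lra. }
  assert (HdGb : forall y, u <= y <= t -> Rabs (dG y) <= h y).
  { intros y Hy. eapply Rle_trans. 2: apply Hhb; auto.
    pose proof (alg_bound (a y) (b1 y) (c y) (d y) (bb y) (Q y) (P y) x (Hpos y Hy) Hx (HP1 y Hy)) as Hal.
    simpl in Hal. unfold dG, En. exact Hal. }
  assert (HG1 : G t - RInt h u t <= G u - RInt h u u).
  { apply (mono_closed (fun y => G y - RInt h u y) (fun y => dG y - h y)); auto.
    - intros y Hy. apply dR_minus. apply HdG; auto. apply dRInt. lra.
    - intros y Hy. pose proof (HdGb y Hy). pose proof (Rle_abs (dG y)). lra. }
  assert (HG2 : - G t - RInt h u t <= - G u - RInt h u u).
  { apply (mono_closed (fun y => - G y - RInt h u y) (fun y => - dG y - h y)); auto.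
    - intros y Hy. apply dR_minus. apply (@is_derive_opp R_AbsRing R_NormedModule). apply HdG; auto. apply dRInt. lra.
    - intros y Hy. pose proof (HdGb y Hy). pose proof (Rle_abs (- dG y)). rewrite Rabs_Ropp in H1. lra. }
  rewrite RInt_point in HG1, HG2. unfold zero in HG1, HG2; simpl in HG1, HG2.
  assert (Hb4 : forall y, u <= y <= t -> Rabs (4 * (P y * ((a y ^ 2 + b1 y ^ 2) / En y))) <= 4).
  { intros y Hy. rewrite !Rabs_mult. rewrite (Rabs_pos_eq 4) by lra.
    pose proof (th_bound y (Hpos y Hy)). rewrite (Rabs_pos_eq (_ / _)) by lra.
    pose proof (HP1 y Hy). pose proof (Rabs_pos (P y)). nra. }
  pose proof (Hb4 t ltac:(lra)) as B1. pose proof (Hb4 u ltac:(lra)) as B2.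
  unfold G in HG1, HG2.
  set (zt := 4 * (P t * ((a t ^ 2 + b1 t ^ 2) / En t))) in *.
  set (zu := 4 * (P u * ((a u ^ 2 + b1 u ^ 2) / En u))) in *.
  pose proof (Rle_abs zt). pose proof (Rle_abs (- zt)). rewrite Rabs_Ropp in *. pose proof (Rle_abs zu). pose proof (Rle_abs (- zu)). rewrite Rabs_Ropp in *.
  split; lra.
Qed.

End Energy.

Lemma Rmax0_eq z : Rmax z 0 = (z + Rabs z) / 2.
Proof. unfold Rmax. destruct (Rle_dec z 0). rewrite Rabs_left1; lra. rewrite Rabs_right; lra. Qed.

Lemma cont_max0 y : continuous (fun z => Rmax z 0) y.
Proof.
  apply (continuous_ext_loc _ (fun z => (z + Rabs z) / 2)).
  - apply filter_forall. intros z. rewrite Rmax0_eq. reflexivity.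
  - unfold Rdiv. apply (cR_mult (fun z => z + Rabs z) (fun _ => / 2)). apply cR_plus.
    apply (@continuous_id R_UniformSpace). apply cR_abs. apply (@continuous_id R_UniformSpace). apply cR_const.
Qed.

Definition cont0 (f : R -> R) := forall y, 0 <= y -> continuous (fun z => f (Rmax z 0)) y.

Lemma cont0_all f : cont0 f -> forall y, continuous (fun z => f (Rmax z 0)) y.
Proof.
  intros H y. destruct (Rle_dec 0 y) as [Hy|Hy]. apply H; auto.
  apply (continuous_ext_loc _ (fun _ => f 0)).
  - assert (He : 0 < - y) by lra. exists (mkposreal _ He). intros z Hz.
    apply ballR in Hz. apply Rabs_def2 in Hz. unfold minus, plus, opp in Hz; simpl in Hz.
    rewrite Rmax_right by lra. reflexivity.
  - apply cR_const.
Qed.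

Lemma cont0_on f : cont0 f -> cont_on f.
Proof.
  intros H y Hy. apply (continuous_ext_loc _ (fun z => f (Rmax z 0))).
  - exists (mkposreal _ Hy). intros z Hz.
    apply ballR in Hz. apply Rabs_def2 in Hz. unfold minus, plus, opp in Hz; simpl in Hz.
    rewrite Rmax_left by lra. reflexivity.
  - apply H; lra.
Qed.

Lemma ex_RInt0 f a b : cont0 f -> 0 <= a -> 0 <= b -> ex_RInt f a b.
Proof.
  intros H Ha Hb.
  apply (@ex_RInt_ext R_NormedModule (fun z => f (Rmax z 0))).
  - intros x Hx. rewrite Rmax_left. auto. destruct Hx as [Hx _].
    unfold Rmin in Hx. destruct (Rle_dec a b); lra.
  - apply (@ex_RInt_continuous R_CompleteNormedModule). intros z _. apply cont0_all; auto.
Qed.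

Lemma cont0_Iinf f : cont0 f -> ex_RInt_gen f (at_point 1) pinf ->
  (forall y, 0 <= y -> ex_RInt_gen f (at_point y) pinf /\ Iinf f y = RInt f y 1 + Iinf f 1) /\
  cont0 (Iinf f).
Proof.
  intros H H1.
  assert (Hs : forall y, 0 <= y -> ex_RInt_gen f (at_point y) pinf /\ Iinf f y = RInt f y 1 + Iinf f 1).
  { intros y Hy.
    assert (E1 : ex_RInt_gen f (at_point y) (at_point 1)).
    { apply (proj2 (ex_RInt_gen_at_point f y 1)). apply ex_RInt0; auto; lra. }
    split. eapply ex_RInt_gen_Chasles; eauto.
    unfold Iinf. rewrite <- (RInt_gen_Chasles f 1 E1 H1).
    rewrite RInt_gen_at_point. reflexivity. apply ex_RInt0; auto; lra. }
  split; auto.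
  set (ft := fun z => f (Rmax z 0)).
  assert (Hft : forall w, continuous ft w) by (apply cont0_all; auto).
  assert (Hpsi : forall w, continuous (fun z => RInt ft z 1) w).
  { intros w. apply (@ex_derive_continuous R_AbsRing R_NormedModule). eexists.
    apply (is_derive_RInt' ft (fun z => RInt ft z 1) w 1).
    - apply filter_forall. intros z. apply (@RInt_correct R_CompleteNormedModule ft).
      apply (@ex_RInt_continuous R_CompleteNormedModule). intros; apply Hft.
    - apply Hft. }
  intros y Hy.
  apply (continuous_ext_loc _ (fun z => RInt ft (Rmax z 0) 1 + Iinf f 1)).
  - apply filter_forall. intros z. rewrite (proj2 (Hs (Rmax z 0) (Rmax_r _ _))).
    f_equal. apply RInt_ext. intros x Hx. unfold ft. rewrite Rmax_left. auto.
    destruct Hx as [Hx _]. pose proof (Rmax_r z 0). unfold Rmin in Hx. destruct (Rle_dec (Rmax z 0) 1); lra.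
  - apply cR_plus. 2: apply cR_const.
    apply (continuous_comp (fun z => Rmax z 0) (fun w => RInt ft w 1)). apply cont_max0. apply Hpsi.
Qed.

Lemma cont0_abs f : cont0 f -> cont0 (fun y => Rabs (f y)).
Proof. intros H y Hy. apply cR_abs. apply H; auto. Qed.

Lemma cont0_M (M : R -> R) :
  (forall t, 0 <= t -> filterlim M (within (fun x => 0 <= x) (locally t)) (locally (M t))) ->
  cont0 M.
Proof.
  intros H y Hy. destruct (Req_dec y 0) as [->|Hy0].
  - intros P HP. replace (Rmax 0 0) with 0 in HP by (rewrite Rmax_left; lra).
    specialize (H 0 (Rle_refl 0) P HP). unfold within in H. simpl in H.
    destruct H as [e He]. exists e. intros z Hz. unfold filtermap.
    apply He.
    + apply ballR in Hz. apply ballR.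
      assert (Rabs (Rmax z 0 - 0) <= Rabs (z - 0)).
      { unfold Rmax. destruct (Rle_dec z 0). replace (0 - 0) with 0 by ring. rewrite Rabs_R0. apply Rabs_pos. lra. }
      unfold minus, plus, opp in *; simpl in *. unfold Rminus in *. assert (Hz2 : Rabs (z + - 0) < e) by exact Hz. lra.
    + apply Rmax_r.
  - apply (continuous_ext_loc _ M).
    + assert (Hp : 0 < y) by lra. exists (mkposreal _ Hp). intros z Hz.
      apply ballR in Hz. apply Rabs_def2 in Hz. unfold minus, plus, opp in Hz; simpl in Hz.
      rewrite Rmax_left by lra. reflexivity.
    + apply cont_of_within; auto. lra.
Qed.

Lemma exp_le_mono x y : x <= y -> exp x <= exp y.
Proof. intros H. destruct (Req_dec x y) as [->|]. lra. left. apply exp_increasing. lra. Qed.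

Lemma ln_le_mono x y : 0 < x -> x <= y -> ln x <= ln y.
Proof. intros H H1. destruct (Req_dec x y) as [->|]. lra. left. apply ln_increasing; lra. Qed.

Lemma ln_nonneg x : 1 <= x -> 0 <= ln x.
Proof. intros H. pose proof (ln_le_mono 1 x ltac:(lra) H). rewrite ln_1 in H0. auto. Qed.

Lemma pw_pos y e : 0 < pw y e.
Proof. unfold pw, Rpower. apply exp_pos. Qed.

Lemma pw_le1 y e : 0 <= y -> e <= 0 -> pw y e <= 1.
Proof. intros Hy He. unfold pw, Rpower. apply Rle_trans with (exp 0). 2: rewrite exp_0; lra.
  apply exp_le_mono. pose proof (ln_nonneg (1 + y) ltac:(lra)). nra. Qed.

Lemma pw_mult y e1 e2 : pw y e1 * pw y e2 = pw y (e1 + e2).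
Proof. unfold pw. rewrite Rpower_plus. ring. Qed.

Lemma pw_0 y : 0 <= y -> pw y 0 = 1.
Proof. intros. unfold pw. apply Rpower_O. lra. Qed.

Lemma d_pw y e : 0 <= y -> is_derive (fun z => pw z e) y (e / (1 + y) * pw y e).
Proof.
  intros Hy. unfold pw, Rpower.
  assert (H1 : is_derive (fun z => 1 + z) y 1).
  { eapply dR_eq. apply (dR_plus (fun _ => 1) (fun z => z)). apply dR_const. apply dR_id. ring. }
  pose proof (dR_ln (fun z => 1 + z) y 1 H1 ltac:(lra)) as H2.
  pose proof (dR_scal e _ y _ H2) as H3.
  pose proof (dR_exp _ y _ H3) as H4.
  eapply dR_eq. exact H4. simpl. field. lra.
Qed.

Lemma dRInt_pos (g : R -> R) lo y : (forall z, 0 <= z -> ex_RInt g lo z) -> cont_on g -> 0 < y ->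
  is_derive (fun z => RInt g lo z) y (g y).
Proof.
  intros Hex Hc Hy. apply (is_derive_RInt g (fun z => RInt g lo z) lo y).
  - exists (mkposreal _ Hy). intros b Hbb.
    apply (@RInt_correct R_CompleteNormedModule g). apply Hex.
    apply ballR in Hbb. apply Rabs_def2 in Hbb. unfold minus, plus, opp in Hbb; simpl in Hbb. lra.
  - apply Hc; auto.
Qed.

Lemma ibp_bound (f : R -> R) (C1 al ga T u t : R) :
  cont0 f -> (forall y, 0 <= y -> 0 <= f y) -> 0 <= C1 -> al < ga -> 0 < ga -> 0 < T -> T <= u <= t ->
  (forall y, 0 <= y -> RInt f 0 y <= C1 * pw y al) ->
  RInt (fun y => f y * pw y (- ga)) u t <= C1 + C1 * ga / (ga - al).
Proof.
  intros Hf Hfp HC Hag Hg HT [Hu Hut] HF.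
  set (g := fun y => f y * pw y (- ga)).
  assert (Hgc : cont_on g).
  { intros y Hy. apply cR_mult. apply cont0_on; auto. apply (cont_of_der _ y _ (d_pw y (- ga) ltac:(lra))). }
  assert (Hexf : forall z, 0 <= z -> ex_RInt f 0 z) by (intros; apply ex_RInt0; auto; lra).
  assert (Hexg : forall z, 0 <= z -> ex_RInt g u z).
  { intros z Hz. apply (@ex_RInt_ext R_NormedModule (fun y => f (Rmax y 0) * pw (Rmax y 0) (- ga))).
    - intros x Hx. unfold g. rewrite Rmax_left. auto. destruct Hx as [Hx _].
      unfold Rmin in Hx. destruct (Rle_dec u z); lra.
    - apply (@ex_RInt_continuous R_CompleteNormedModule). intros y Hy. apply cR_mult. apply cont0_all; auto.
      apply (continuous_comp (fun z => Rmax z 0) (fun w => pw w (- ga))). apply cont_max0.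
      apply (cont_of_der _ _ _ (d_pw _ (- ga) (Rmax_r _ _))). }
  set (K := C1 * ga / (ga - al)).
  set (D := fun y => RInt g u y - RInt f 0 y * pw y (- ga) + K * pw y (al - ga)).
  set (dD := fun y => g y - (f y * pw y (- ga) + RInt f 0 y * (- ga / (1 + y) * pw y (- ga)))
                      + K * ((al - ga) / (1 + y) * pw y (al - ga))).
  assert (HD : D t <= D u).
  { apply (mono_closed D dD u t Hut).
    - intros y Hy. unfold D, dD.
      apply (dR_plus (fun y => RInt g u y - RInt f 0 y * pw y (- ga)) (fun y => K * pw y (al - ga))).
      apply (dR_minus (fun y => RInt g u y) (fun y => RInt f 0 y * pw y (- ga))).
      apply dRInt_pos; auto; lra.
      apply (dR_mult (fun y => RInt f 0 y) (fun y => pw y (- ga))). apply dRInt_pos; auto.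
      intros; apply cont0_on; auto. lra. apply d_pw; lra.
      apply dR_scal. apply d_pw; lra.
    - intros y Hy. unfold dD, g.
      assert (Fle : RInt f 0 y * pw y (- ga) <= C1 * pw y (al - ga)).
      { replace (al - ga) with (al + - ga) by ring. rewrite <- pw_mult.
        pose proof (pw_pos y (- ga)). pose proof (HF y ltac:(lra)). nra. }
      assert (E : f y * pw y (- ga) - (f y * pw y (- ga) + RInt f 0 y * (- ga / (1 + y) * pw y (- ga))) +
                  K * ((al - ga) / (1 + y) * pw y (al - ga))
                = ga / (1 + y) * (RInt f 0 y * pw y (- ga) - C1 * pw y (al - ga))).
      { unfold K. field. split; lra. }
      rewrite E. assert (0 < ga / (1 + y)) by (apply Rdiv_lt_0_compat; lra).
      assert (RInt f 0 y * pw y (- ga) - C1 * pw y (al - ga) <= 0) by lra. nra. }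
  unfold D in HD. rewrite RInt_point in HD. unfold zero in HD; simpl in HD.
  assert (F0 : 0 <= RInt f 0 u).
  { apply RInt_nonneg. lra. apply Hexf; lra. intros; apply Hfp; lra. }
  assert (F1 : 0 <= RInt f 0 t).
  { apply RInt_nonneg. lra. apply Hexf; lra. intros; apply Hfp; lra. }
  pose proof (pw_pos u (- ga)). pose proof (pw_pos t (- ga)).
  pose proof (pw_pos t (al - ga)). pose proof (pw_le1 u (al - ga) ltac:(lra) ltac:(lra)).
  pose proof (pw_le1 t (al - ga) ltac:(lra) ltac:(lra)).
  assert (Fle : RInt f 0 t * pw t (- ga) <= C1 * pw t (al - ga)).
  { replace (al - ga) with (al + - ga) by ring. rewrite <- pw_mult.
    pose proof (HF t ltac:(lra)). nra. }
  assert (0 <= K) by (unfold K; apply Rmult_le_pos; [nra | apply Rlt_le, Rinv_0_lt_compat; lra]).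
  assert (RInt f 0 u * pw u (- ga) >= 0) by nra.
  assert (K * pw u (al - ga) <= K) by nra.
  assert (K * pw t (al - ga) >= 0) by nra.
  assert (C1 * pw t (al - ga) <= C1) by nra.
  unfold K in *. lra.
Qed.

Lemma cont_Cmod (z : Complex.C) : continuous Cmod z.
Proof.
  destruct z as [z1 z2]. unfold Cmod.
  apply (continuous_comp (fun w : Complex.C => fst w ^ 2 + snd w ^ 2) sqrt).
  2: apply continuous_sqrt.
  apply (@continuous_plus (prod_UniformSpace R_UniformSpace R_UniformSpace) R_AbsRing R_NormedModule (fun w : Complex.C => fst w ^ 2) (fun w : Complex.C => snd w ^ 2)).
  - simpl. apply (@continuous_mult (prod_UniformSpace R_UniformSpace R_UniformSpace) R_AbsRing).
    apply continuous_fst.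
    apply (@continuous_mult (prod_UniformSpace R_UniformSpace R_UniformSpace) R_AbsRing). apply continuous_fst. apply continuous_const.
  - simpl. apply (@continuous_mult (prod_UniformSpace R_UniformSpace R_UniformSpace) R_AbsRing).
    apply continuous_snd.
    apply (@continuous_mult (prod_UniformSpace R_UniformSpace R_UniformSpace) R_AbsRing). apply continuous_snd. apply continuous_const.
Qed.

Lemma cont_cnorm2 (w : Complex.C * Complex.C) : continuous cnorm2 w.
Proof.
  destruct w as [p q]. unfold cnorm2.
  apply (continuous_comp (fun w : Complex.C * Complex.C => Cmod (fst w) ^ 2 + Cmod (snd w) ^ 2) sqrt).
  2: apply continuous_sqrt.
  apply (@continuous_plus (prod_UniformSpace (prod_UniformSpace R_UniformSpace R_UniformSpace) (prod_UniformSpace R_UniformSpace R_UniformSpace)) R_AbsRing R_NormedModule (fun w : Complex.C * Complex.C => Cmod (fst w) ^ 2) (fun w => Cmod (snd w) ^ 2)).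
  - simpl. apply (@continuous_mult (prod_UniformSpace (prod_UniformSpace R_UniformSpace R_UniformSpace) (prod_UniformSpace R_UniformSpace R_UniformSpace)) R_AbsRing).
    apply (continuous_comp fst Cmod). apply continuous_fst. apply cont_Cmod.
    apply (@continuous_mult (prod_UniformSpace (prod_UniformSpace R_UniformSpace R_UniformSpace) (prod_UniformSpace R_UniformSpace R_UniformSpace)) R_AbsRing).
    apply (continuous_comp fst Cmod). apply continuous_fst. apply cont_Cmod. apply continuous_const.
  - simpl. apply (@continuous_mult (prod_UniformSpace (prod_UniformSpace R_UniformSpace R_UniformSpace) (prod_UniformSpace R_UniformSpace R_UniformSpace)) R_AbsRing).
    apply (continuous_comp snd Cmod). apply continuous_snd. apply cont_Cmod.
    apply (@continuous_mult (prod_UniformSpace (prod_UniformSpace R_UniformSpace R_UniformSpace) (prod_UniformSpace R_UniformSpace R_UniformSpace)) R_AbsRing).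
    apply (continuous_comp snd Cmod). apply continuous_snd. apply cont_Cmod. apply continuous_const.
Qed.

Lemma dC_fst (f : R -> Complex.C) t (l : Complex.C) : is_derive f t l -> is_derive (fun s => fst (f s)) t (fst l).
Proof.
  intros H. unfold is_derive in *.
  pose proof (filterdiff_comp' f fst t (fun y => scal y l) fst H) as H2.
  eapply filterdiff_ext_lin. apply H2. apply filterdiff_linear. apply is_linear_fst.
  intros y. reflexivity.
Qed.
Lemma dC_snd (f : R -> Complex.C) t (l : Complex.C) : is_derive f t l -> is_derive (fun s => snd (f s)) t (snd l).
Proof.
  intros H. unfold is_derive in *.
  pose proof (filterdiff_comp' f snd t (fun y => scal y l) snd H) as H2.
  eapply filterdiff_ext_lin. apply H2. apply filterdiff_linear. apply is_linear_snd.
  intros y. reflexivity.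
Qed.


Lemma ratio (Eu Et L : R) : 0 <= L -> 0 <= Eu -> 0 <= Et -> (Eu = 0 -> Et = 0) ->
  (0 < Eu -> 0 < Et /\ ln Et - ln Eu <= L /\ ln Eu - ln Et <= L) ->
  / exp L * sqrt Eu <= sqrt Et /\ sqrt Et <= exp L * sqrt Eu.
Proof.
  intros HL Hu Ht H0 Hp.
  assert (He1 : 1 <= exp L) by (pose proof (exp_ineq1_le L); lra).
  assert (Hsq : forall e, 1 <= e -> sqrt e <= e).
  { intros e He. rewrite <- (sqrt_square e) at 2 by lra. apply sqrt_le_1_alt. nra. }
  destruct (Req_dec Eu 0) as [E0|E0].
  - rewrite E0, (H0 E0), sqrt_0. split; lra.
  - destruct (Hp ltac:(lra)) as [Htp [H1 H2]].
    assert (A1 : Et <= exp L * Eu).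
    { apply Rle_trans with (exp (ln Eu + L)). rewrite <- (exp_ln Et) at 1 by lra. apply exp_le_mono; lra.
      rewrite exp_plus, exp_ln by lra. lra. }
    assert (A2 : Eu <= exp L * Et).
    { apply Rle_trans with (exp (ln Et + L)). rewrite <- (exp_ln Eu) at 1 by lra. apply exp_le_mono; lra.
      rewrite exp_plus, exp_ln by lra. lra. }
    pose proof (exp_pos L).
    assert (S1 : sqrt Et <= exp L * sqrt Eu).
    { apply Rle_trans with (sqrt (exp L * Eu)). apply sqrt_le_1_alt; auto.
      rewrite sqrt_mult by lra. apply Rmult_le_compat_r. apply sqrt_pos. apply Hsq; auto. }
    assert (S2 : sqrt Eu <= exp L * sqrt Et).
    { apply Rle_trans with (sqrt (exp L * Et)). apply sqrt_le_1_alt; auto.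
      rewrite sqrt_mult by lra. apply Rmult_le_compat_r. apply sqrt_pos. apply Hsq; auto. }
    split; auto.
    apply Rmult_le_reg_l with (exp L); auto. rewrite <- Rmult_assoc, Rinv_r, Rmult_1_l by lra. auto.
Qed.

Lemma rc_delta (f : R -> R) T (eps : posreal) : filterlim f (at_right T) (locally (f T)) ->
  exists d : posreal, forall u, T < u < T + d -> Rabs (f u - f T) < eps.
Proof.
  intros H. destruct (H (ball (f T) eps) (locally_ball _ _)) as [d Hd].
  exists d. intros u Hu. apply Hd. apply ballR. unfold minus, plus, opp; simpl.
  apply Rabs_def1; lra. lra.
Qed.

Lemma lim_lo (f : R -> R) T t K c : T < t -> 0 < K -> filterlim f (at_right T) (locally (f T)) ->
  (forall u, T < u <= t -> c <= K * f u) -> c <= K * f T.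
Proof.
  intros Ht HK Hf H. apply Rnot_lt_le. intros Hc.
  assert (He : 0 < (c - K * f T) / K) by (apply Rdiv_lt_0_compat; lra).
  destruct (rc_delta f T (mkposreal _ He) Hf) as [d Hd].
  set (u := T + Rmin d (t - T) / 2).
  assert (Hm : 0 < Rmin d (t - T)) by (apply Rmin_pos; [apply cond_pos | lra]).
  assert (Hu : T < u < T + d) by (unfold u; pose proof (Rmin_l d (t - T)); lra).
  specialize (Hd u Hu). simpl in Hd. apply Rabs_def2 in Hd.
  assert (u <= t) by (unfold u; pose proof (Rmin_r d (t - T)); lra).
  specialize (H u ltac:(lra)).
  assert (K * (f u - f T) < K * ((c - K * f T) / K)) by (apply Rmult_lt_compat_l; lra).
  replace (K * ((c - K * f T) / K)) with (c - K * f T) in H1 by (field; lra). lra.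
Qed.

Lemma lim_hi (f : R -> R) T t K c : T < t -> 0 < K -> filterlim f (at_right T) (locally (f T)) ->
  (forall u, T < u <= t -> f u <= K * c) -> f T <= K * c.
Proof.
  intros Ht HK Hf H. apply Rnot_lt_le. intros Hc.
  assert (He : 0 < f T - K * c) by lra.
  destruct (rc_delta f T (mkposreal _ He) Hf) as [d Hd].
  set (u := T + Rmin d (t - T) / 2).
  assert (Hm : 0 < Rmin d (t - T)) by (apply Rmin_pos; [apply cond_pos | lra]).
  assert (Hu : T < u < T + d) by (unfold u; pose proof (Rmin_l d (t - T)); lra).
  specialize (Hd u Hu). simpl in Hd. apply Rabs_def2 in Hd.
  assert (u <= t) by (unfold u; pose proof (Rmin_r d (t - T)); lra).
  specialize (H u ltac:(lra)). lra.
Qed.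

Section Final.
Variable M : R -> R.
Variables (T C3 ga : R) (n : nat).
Variable W : R -> list R -> Complex.C * Complex.C.
Hypothesis HMc : cont_on M.
Hypothesis HexM : forall t, 0 <= t -> ex_RInt_gen M (at_point t) pinf.
Hypothesis HexMM : forall s, 0 <= s -> ex_RInt_gen (Iinf M) (at_point s) pinf.
Hypothesis HM3b : forall t, 0 <= t -> ex_RInt_gen (fun s => (Iinf M s) ^ 2) (at_point t) pinf.
Hypothesis HM3c : ex_RInt_gen (fun t => Iinf (fun s => (Iinf M s) ^ 2) t) (at_point 0) pinf.
Hypothesis HT0 : 0 < T.
Hypothesis HT : forall t, T <= t -> Rabs (Iinf (Qk M 1) t) <= 1 /\ phi M t <= / 6 ^ 4.
Hypothesis Hga : 0 < ga.
Hypothesis HC3 : forall t, 0 <= t -> Rabs (Iinf M t) <= C3 * pw t (- ga).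
Hypothesis HWc : forall xi, length xi = n ->
      filterlim (fun t => W t xi) (at_right T) (locally (W T xi)).
Hypothesis HW1 : forall xi, length xi = n -> forall t, T < t ->
      is_derive (fun s => fst (W s xi)) t
        (Cplus (Cmult (RtoC (-2 * bfun M t)) (fst (W t xi)))
               (Cmult (0, enorm xi) (snd (W t xi)))).
Hypothesis HW2 : forall xi, length xi = n -> forall t, T < t ->
      is_derive (fun s => snd (W s xi)) t
        (Cmult (0, enorm xi) (fst (W t xi))).

Definition hx (x : R) := fun y => 24 * A M y + 4 * (Rabs (Pf M y) * Rabs (Q1 M y)) + (4 * x) * Rabs (Pf M y).

Lemma cont_hx x : cont_on (hx x).
Proof.
  intros y Hy. unfold hx. apply cR_plus. apply cR_plus.
  apply cR_scal. apply (cont_A M); auto.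
  apply cR_scal. apply cR_mult; apply cR_abs. apply (cont_P M); auto. apply (cont_Q1 M); auto.
  apply cR_scal. apply cR_abs. apply (cont_P M); auto.
Qed.

Lemma Q1_bound y : T <= y -> Rabs (Q1 M y) <= Rabs C3.
Proof.
  intros Hy. unfold Q1. rewrite Rabs_Ropp. eapply Rle_trans. apply HC3. lra.
  pose proof (pw_le1 y (- ga) ltac:(lra) ltac:(lra)). pose proof (pw_pos y (- ga)).
  pose proof (Rle_abs C3). destruct (Rle_dec 0 C3). nra. pose proof (Rabs_pos C3). nra.
Qed.

Lemma main_est xi s t Kh : length xi = n -> T <= s <= t -> 0 <= Kh ->
  (forall u, s <= u <= t -> T < u -> RInt (hx (enorm xi)) u t <= Kh) ->
  / exp (Kh + 8) * cnorm2 (W s xi) <= cnorm2 (W t xi) /\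
  cnorm2 (W t xi) <= exp (Kh + 8) * cnorm2 (W s xi).
Proof.
  intros Hlen [Hs Hst] HK HR.
  set (x := enorm xi) in *.
  assert (Hx : 0 <= x) by apply sqrt_pos.
  set (a := fun y => fst (fst (W y xi))). set (b1 := fun y => snd (fst (W y xi))).
  set (c := fun y => fst (snd (W y xi))). set (d := fun y => snd (snd (W y xi))).
  assert (Hcn : forall y, cnorm2 (W y xi) = sqrt (En a b1 c d y)).
  { intros y. unfold cnorm2, Cmod, En, a, b1, c, d.
    rewrite !pow2_sqrt. f_equal; ring.
    1,2: apply Rplus_le_le_0_compat; apply pow2_ge_0. }
  assert (core : forall u, s <= u <= t -> T < u ->
    / exp (Kh + 8) * cnorm2 (W u xi) <= cnorm2 (W t xi) /\
    cnorm2 (W t xi) <= exp (Kh + 8) * cnorm2 (W u xi)).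
  { intros u Hu HTu. rewrite !Hcn.
    assert (Ha : forall y, u <= y <= t -> is_derive a y (-2 * bfun M y * a y - x * d y)).
    { intros y Hy. eapply dR_eq. apply (dC_fst (fun s => fst (W s xi))). apply HW1; auto; lra.
      unfold a, d, x. simpl. ring. }
    assert (Hb : forall y, u <= y <= t -> is_derive b1 y (-2 * bfun M y * b1 y + x * c y)).
    { intros y Hy. eapply dR_eq. apply (dC_snd (fun s => fst (W s xi))). apply HW1; auto; lra.
      unfold b1, c, x. simpl. ring. }
    assert (Hc : forall y, u <= y <= t -> is_derive c y (- x * b1 y)).
    { intros y Hy. eapply dR_eq. apply (dC_fst (fun s => snd (W s xi))). apply HW2; auto; lra.
      unfold b1, c, x. simpl. ring. }
    assert (Hd : forall y, u <= y <= t -> is_derive d y (x * a y)).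
    { intros y Hy. eapply dR_eq. apply (dC_snd (fun s => snd (W s xi))). apply HW2; auto; lra.
      unfold a, d, x. simpl. ring. }
    assert (HPd : forall y, u <= y <= t -> is_derive (Pf M) y (- Q1 M y)).
    { intros y Hy. apply der_P; auto. lra. }
    assert (HP1 : forall y, u <= y <= t -> Rabs (Pf M y) <= 1).
    { intros y Hy. apply (P_le1 M T HT). lra. }
    assert (Hbd : forall y, T <= y -> Rabs (bfun M y - Q1 M y) <= 3 * A M y).
    { intros y Hy. apply (b_decomp M T); auto. }
    assert (HAn : forall y, T <= y -> 0 <= A M y <= A M T).
    { intros y Hy. split. apply A_nonneg; auto; lra. apply A_mono; auto. }
    assert (Hhb : forall y, u <= y <= t ->
      4 * Rabs (bfun M y - Q1 M y) + 4 * Rabs (Pf M y) * (Rabs (bfun M y) + x) <= hx x y).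
    { intros y Hy. unfold hx. pose proof (Hbd y ltac:(lra)). pose proof (HAn y ltac:(lra)).
      pose proof (HP1 y Hy). pose proof (Rabs_pos (Pf M y)).
      assert (Rabs (bfun M y) <= Rabs (Q1 M y) + 3 * A M y).
      { replace (bfun M y) with (Q1 M y + (bfun M y - Q1 M y)) by ring.
        eapply Rle_trans. apply Rabs_triang. lra. }
      assert (Rabs (Pf M y) * Rabs (bfun M y) <= Rabs (Pf M y) * (Rabs (Q1 M y) + 3 * A M y))
        by (apply Rmult_le_compat_l; lra).
      assert (Rabs (Pf M y) * (3 * A M y) <= 3 * A M y) by nra.
      nra. }
    assert (HB : forall y, u <= y <= t -> Rabs (bfun M y) <= Rabs C3 + 3 * A M T).
    { intros y Hy. pose proof (Hbd y ltac:(lra)). pose proof (HAn y ltac:(lra)). pose proof (Q1_bound y ltac:(lra)).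
      replace (bfun M y) with (Q1 M y + (bfun M y - Q1 M y)) by ring.
      eapply Rle_trans. apply Rabs_triang. lra. }
    assert (Hh : forall y, T < y -> continuous (hx x) y).
    { intros y Hy. apply cont_hx. lra. }
    apply ratio.
    - lra.
    - apply En_nonneg.
    - apply En_nonneg.
    - apply (En_zero a b1 c d (bfun M) x u t (Rabs C3 + 3 * A M T)); auto; lra.
    - intros Hpos. split.
      + apply (En_pos a b1 c d (bfun M) x u t (Rabs C3 + 3 * A M T)); auto; lra.
      + destruct (En_log a b1 c d (bfun M) (Q1 M) (Pf M) (hx x) x u t (Rabs C3 + 3 * A M T) T) as [L1 L2]; auto; try lra.
        pose proof (HR u Hu HTu). split; lra. }
  destruct (Req_dec s T) as [->|HsT].
  - destruct (Req_dec t T) as [->|HtT].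
    + pose proof (exp_pos (Kh + 8)). assert (1 <= exp (Kh + 8)) by (pose proof (exp_ineq1_le (Kh + 8)); lra).
      split.
      * apply Rle_trans with (1 * cnorm2 (W T xi)). apply Rmult_le_compat_r. unfold cnorm2; apply sqrt_pos.
        rewrite <- Rinv_1. apply Rinv_le_contravar; lra. lra.
      * assert (0 <= cnorm2 (W T xi)) by (unfold cnorm2; apply sqrt_pos). nra.
    + assert (HtT' : T < t) by lra. pose proof (exp_pos (Kh + 8)).
      assert (Hrc : filterlim (fun y => cnorm2 (W y xi)) (at_right T) (locally (cnorm2 (W T xi)))).
      { eapply filterlim_comp. apply HWc; auto. apply cont_cnorm2. }
      split.
      * assert (cnorm2 (W T xi) <= exp (Kh + 8) * cnorm2 (W t xi)).
        { apply (lim_hi (fun y => cnorm2 (W y xi)) T t); auto.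
          intros u Hu. destruct (core u ltac:(lra) ltac:(lra)) as [C1 _].
          apply Rmult_le_reg_l with (/ exp (Kh + 8)). apply Rinv_0_lt_compat; lra.
          rewrite <- Rmult_assoc, Rinv_l, Rmult_1_l by lra. auto. }
        apply Rmult_le_reg_l with (exp (Kh + 8)); auto.
        rewrite <- Rmult_assoc, Rinv_r, Rmult_1_l by lra. auto.
      * apply (lim_lo (fun y => cnorm2 (W y xi)) T t); auto.
        intros u Hu. apply (core u ltac:(lra) ltac:(lra)).
  - apply core; lra.
Qed.


Lemma RInt_hx_split x u t : T <= u <= t ->
  RInt (hx x) u t = 24 * RInt (A M) u t + 4 * RInt (fun y => Rabs (Pf M y) * Rabs (Q1 M y)) u t
                    + (4 * x) * RInt (fun y => Rabs (Pf M y)) u t.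
Proof.
  intros [Hu Hut].
  assert (cA : cont_on (A M)) by (apply cont_A; auto).
  assert (cP : cont_on (fun y => Rabs (Pf M y))) by (intros y Hy; apply cR_abs, (cont_P M); auto).
  assert (cPQ : cont_on (fun y => Rabs (Pf M y) * Rabs (Q1 M y))).
  { intros y Hy. apply cR_mult. apply cP; auto. apply cR_abs, (cont_Q1 M); auto. }
  assert (E1 : ex_RInt (A M) u t) by (apply ex_RInt_co; auto; lra).
  assert (E2 : ex_RInt (fun y => Rabs (Pf M y)) u t) by (apply ex_RInt_co; auto; lra).
  assert (E3 : ex_RInt (fun y => Rabs (Pf M y) * Rabs (Q1 M y)) u t) by (apply ex_RInt_co; auto; lra).
  assert (E4 : ex_RInt (fun y => 24 * A M y) u t) by (apply ex_RInt_co; try lra; intros y Hy; apply cR_scal, cA; auto).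
  assert (E5 : ex_RInt (fun y => 4 * (Rabs (Pf M y) * Rabs (Q1 M y))) u t) by (apply ex_RInt_co; try lra; intros y Hy; apply cR_scal, cPQ; auto).
  assert (E6 : ex_RInt (fun y => (4 * x) * Rabs (Pf M y)) u t) by (apply ex_RInt_co; try lra; intros y Hy; apply cR_scal, cP; auto).
  assert (E7 : ex_RInt (fun y => 24 * A M y + 4 * (Rabs (Pf M y) * Rabs (Q1 M y))) u t)
    by (apply ex_RInt_co; try lra; intros y Hy; apply cR_plus; [apply cR_scal, cA | apply cR_scal, cPQ]; auto).
  unfold hx.
  assert (P1 : RInt (fun y => 24 * A M y + 4 * (Rabs (Pf M y) * Rabs (Q1 M y)) + (4 * x) * Rabs (Pf M y)) u t
     = RInt (fun y => 24 * A M y + 4 * (Rabs (Pf M y) * Rabs (Q1 M y))) u t + RInt (fun y => (4 * x) * Rabs (Pf M y)) u t)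
    by exact (@RInt_plus R_CompleteNormedModule (fun y => 24 * A M y + 4 * (Rabs (Pf M y) * Rabs (Q1 M y))) (fun y => (4 * x) * Rabs (Pf M y)) u t E7 E6).
  assert (P2 : RInt (fun y => 24 * A M y + 4 * (Rabs (Pf M y) * Rabs (Q1 M y))) u t
     = RInt (fun y => 24 * A M y) u t + RInt (fun y => 4 * (Rabs (Pf M y) * Rabs (Q1 M y))) u t)
    by exact (@RInt_plus R_CompleteNormedModule (fun y => 24 * A M y) (fun y => 4 * (Rabs (Pf M y) * Rabs (Q1 M y))) u t E4 E5).
  assert (P3 : RInt (fun y => 24 * A M y) u t = 24 * RInt (A M) u t)
    by exact (@RInt_scal R_CompleteNormedModule (A M) u t 24 E1).
  assert (P4 : RInt (fun y => 4 * (Rabs (Pf M y) * Rabs (Q1 M y))) u t = 4 * RInt (fun y => Rabs (Pf M y) * Rabs (Q1 M y)) u t)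
    by exact (@RInt_scal R_CompleteNormedModule (fun y => Rabs (Pf M y) * Rabs (Q1 M y)) u t 4 E3).
  assert (P5 : RInt (fun y => (4 * x) * Rabs (Pf M y)) u t = (4 * x) * RInt (fun y => Rabs (Pf M y)) u t)
    by exact (@RInt_scal R_CompleteNormedModule (fun y => Rabs (Pf M y)) u t (4 * x) E2).
  rewrite P1, P2, P3, P4, P5. reflexivity.
Qed.

Lemma A_RInt u t : T <= u <= t -> RInt (A M) u t <= / 1296.
Proof.
  intros [Hu Hut].
  destruct (RInt_le_Iinf (A M) u t) as [H1 _]; auto; try lra.
  apply cont_A; auto. apply exA; auto; lra. intros; apply A_nonneg; auto; lra.
  pose proof (IA_small M T HMc HexM HM3b HM3c HT0 HT u Hu). lra.
Qed.

End Final.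

Lemma zone_neg (T N al t : R) xi : al <= 0 -> 0 < T -> 0 < N -> 0 < enorm xi -> T <= t ->
  pw t al * enorm xi <= N ->
  T <= t_xi T N al xi <= t /\ forall u, t_xi T N al xi <= u -> enorm xi * pw u al <= N.
Proof.
  intros Hal HT HN Hx Ht Hz. set (x := enorm xi) in *.
  unfold t_xi. fold x. destruct (Req_EM_T al 0) as [->|Hne].
  - rewrite pw_0 in Hz by lra. split. lra. intros u Hu. rewrite pw_0 by lra. lra.
  - assert (Hneg : al < 0) by lra.
    set (r := Rpower (N / x) (1 / al)).
    assert (HNx : 0 < N / x) by (apply Rdiv_lt_0_compat; lra).
    assert (Key1 : forall y, 0 <= y -> pw y al * x <= N -> r <= 1 + y).
    { intros y Hy H. unfold pw, Rpower in H. unfold r, Rpower.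
      assert (exp (al * ln (1 + y)) <= N / x).
      { apply Rmult_le_reg_r with x; auto. unfold Rdiv. rewrite Rmult_assoc, Rinv_l, Rmult_1_r by lra. lra. }
      assert (al * ln (1 + y) <= ln (N / x)).
      { rewrite <- (ln_exp (al * ln (1 + y))). apply ln_le_mono; auto. apply exp_pos. }
      assert (1 / al * ln (N / x) <= ln (1 + y)).
      { assert (1 / al * ln (N / x) <= 1 / al * (al * ln (1 + y))).
        { apply Rmult_le_compat_neg_l. unfold Rdiv. rewrite Rmult_1_l. left. apply Rinv_lt_0_compat; lra. lra. }
        replace (1 / al * (al * ln (1 + y))) with (ln (1 + y)) in H2 by (field; lra). lra. }
      rewrite <- (exp_ln (1 + y)) by lra. apply exp_le_mono. lra. }
    assert (Key2 : forall y, 0 <= y -> r <= 1 + y -> x * pw y al <= N).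
    { intros y Hy H. unfold pw, Rpower. unfold r, Rpower in H.
      assert (1 / al * ln (N / x) <= ln (1 + y)).
      { rewrite <- (ln_exp (1 / al * ln (N / x))). apply ln_le_mono; auto. apply exp_pos. }
      assert (al * ln (1 + y) <= ln (N / x)).
      { assert (al * ln (1 + y) <= al * (1 / al * ln (N / x))) by (apply Rmult_le_compat_neg_l; lra).
        replace (al * (1 / al * ln (N / x))) with (ln (N / x)) in H1 by (field; lra). lra. }
      assert (exp (al * ln (1 + y)) <= N / x).
      { rewrite <- (exp_ln (N / x)) by auto. apply exp_le_mono; auto. }
      apply Rmult_le_reg_r with (/ x). apply Rinv_0_lt_compat; lra.
      rewrite Rmult_comm, <- Rmult_assoc, Rinv_l, Rmult_1_l by lra. auto. }
    pose proof (Key1 t ltac:(lra) Hz).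
    split.
    + split. apply Rmax_l. apply Rmax_lub; lra.
    + intros u Hu. pose proof (Rmax_l T (r - 1)). pose proof (Rmax_r T (r - 1)).
      apply Key2; lra.
Qed.

Theorem proposition2
  (M : R -> R) (alpha beta gamma : R) (T N : R) (n : nat)
  (W : R -> list R -> Coquelicot.Complex.C * Coquelicot.Complex.C)
  (* M continuous on [0, oo) *)
  (HMc : forall t, 0 <= t ->
     filterlim M (within (fun x => 0 <= x) (locally t)) (locally (M t)))
  (* parameter constraints *)
  (Ha1 : alpha <= 1) (Hb1 : beta < 1) (Hg0 : 0 < gamma)
  (Habg : (alpha <> 0 -> gamma >= beta /\ beta >= (alpha + 1) / 2) /\
          (alpha = 0 -> gamma >= beta /\ beta > 1 / 2))
  (* the improper integrals int_t^oo M and int_s^oo int_sig^oo M exist *)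
  (HexM : forall t, 0 <= t -> ex_RInt_gen M (at_point t) pinf)
  (HexMM : forall s, 0 <= s -> ex_RInt_gen (Iinf M) (at_point s) pinf)
  (* (M1) *)
  (HM1a : 0 <= alpha -> exists C, forall t, 0 <= t ->
      RInt (fun s => Rabs (Iinf (Iinf M) s)) 0 t <= C * pw t alpha)
  (HM1b : alpha <= 0 -> exists C, forall t, 0 <= t ->
      ex_RInt_gen (fun s => Rabs (Iinf (Iinf M) s)) (at_point t) pinf /\
      Iinf (fun s => Rabs (Iinf (Iinf M) s)) t <= C * pw t alpha)
  (* (M2) *)
  (HM2 : exists C, forall t, 0 <= t -> Rabs (M t) <= C * pw t (-2 * beta))
  (* (M3) *)
  (HM3a : exists C, forall t, 0 <= t -> Rabs (Iinf M t) <= C * pw t (- gamma))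
  (HM3b : exists C, forall t, 0 <= t ->
      ex_RInt_gen (fun s => (Iinf M s) ^ 2) (at_point t) pinf /\
      Iinf (fun s => (Iinf M s) ^ 2) t <= C * pw t (- gamma))
  (HM3c : ex_RInt_gen (fun t => Iinf (fun s => (Iinf M s) ^ 2) t) (at_point 0) pinf)
  (* sup_t (1+t)^alpha int_t^oo int_s^oo (int_sig^oo M)^2 < oo *)
  (HM4 : exists C, forall t, 0 <= t ->
      ex_RInt_gen (fun s => Iinf (fun sg => (Iinf M sg) ^ 2) s) (at_point t) pinf /\
      pw t alpha * Iinf (fun s => Iinf (fun sg => (Iinf M sg) ^ 2) s) t <= C)
  (* choice of T *)
  (HT0 : 0 < T)
  (HT : forall t, T <= t -> Rabs (Iinf (Qk M 1) t) <= 1 /\ phi M t <= / 6 ^ 4)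
  (HN : 0 < N)
  (* for every xi in R^n, t |-> W t xi solves the system on [T, oo) *)
  (HWc : forall xi, length xi = n ->
      filterlim (fun t => W t xi) (at_right T) (locally (W T xi)))
  (HW1 : forall xi, length xi = n -> forall t, T < t ->
      is_derive (fun s => fst (W s xi)) t
        (Cplus (Cmult (RtoC (-2 * bfun M t)) (fst (W t xi)))
               (Cmult (0, enorm xi) (snd (W t xi)))))
  (HW2 : forall xi, length xi = n -> forall t, T < t ->
      is_derive (fun s => snd (W s xi)) t
        (Cmult (0, enorm xi) (fst (W t xi)))) :
  exists K2, 0 < K2 /\
    forall xi, length xi = n -> enorm xi <> 0 ->
    forall t, T <= t -> pw t alpha * enorm xi <= N ->
      (0 < alpha ->
         / K2 * cnorm2 (W T xi) <= cnorm2 (W t xi) /\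
         cnorm2 (W t xi) <= K2 * cnorm2 (W T xi)) /\
      (alpha <= 0 ->
         / K2 * cnorm2 (W (t_xi T N alpha xi) xi) <= cnorm2 (W t xi) /\
         cnorm2 (W t xi) <= K2 * cnorm2 (W (t_xi T N alpha xi) xi)).
Proof.
  pose proof (cont_of_within M HMc) as Mc.
  assert (HM3b_ : forall t, 0 <= t -> ex_RInt_gen (fun s => (Iinf M s) ^ 2) (at_point t) pinf).
  { destruct HM3b as [Cb HCb]. intros t Ht. apply HCb; auto. }
  pose proof (cont0_M M HMc) as M0.
  destruct HM3a as [C3 HC3].
  destruct (cont0_Iinf M M0 (HexM 1 ltac:(lra))) as [_ IM0].
  destruct (cont0_Iinf (Iinf M) IM0 (HexMM 1 ltac:(lra))) as [_ IIM0].
  set (fP := fun y => Rabs (Iinf (Iinf M) y)).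
  assert (fP0 : cont0 fP) by (apply cont0_abs; auto).
  assert (fPc : cont_on fP) by (apply cont0_on; auto).
  assert (HfP : forall y, 0 <= y -> Rabs (Pf M y) = fP y).
  { intros y Hy. rewrite (proj2 (exP M HexMM y Hy)). unfold fP. apply Rabs_Ropp. }
  assert (HC3' : forall t, 0 <= t -> Rabs (Iinf M t) <= C3 * pw t (- gamma)) by exact HC3.
  assert (HP1 : forall y, T <= y -> Rabs (Pf M y) <= 1) by (intros; apply (P_le1 M T HT); auto).
  assert (HAT : forall y, T <= y -> 0 <= A M y <= A M T).
  { intros y Hy. split. eapply A_nonneg; eauto; lra. eapply A_mono; eauto; lra. }
  destruct (Rlt_le_dec 0 alpha) as [Hapos | Haneg].
  -
    destruct (HM1a (Rlt_le _ _ Hapos)) as [C1 HC1].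
    assert (Hag : alpha < gamma).
    { destruct Habg as [H1 _]. destruct (H1 ltac:(lra)). lra. }
    set (K1 := Rabs C1 + Rabs C1 * gamma / (gamma - alpha)).
    assert (HK1 : 0 <= K1).
    { unfold K1. pose proof (Rabs_pos C1). assert (0 <= Rabs C1 * gamma / (gamma - alpha)).
      apply Rmult_le_pos. nra. apply Rlt_le, Rinv_0_lt_compat; lra. lra. }
    set (Kh := 24 * / 1296 + 4 * (Rabs C3 * K1) + 4 * (Rabs C1 * N)).
    assert (HKh : 0 <= Kh).
    { unfold Kh. pose proof (Rabs_pos C3). pose proof (Rabs_pos C1).
      pose proof (Rmult_le_pos _ _ H HK1). pose proof (Rmult_le_pos _ _ H0 (Rlt_le _ _ HN)). lra. }
    exists (exp (Kh + 8)). split. apply exp_pos.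
    intros xi Hlen Hne t Ht Hz. split; [intros _ | intros; lra].
    apply (main_est M T C3 gamma n W); auto; try lra.
    intros u Hu HTu.
    rewrite (RInt_hx_split M T Mc HexM HexMM HM3b_ HT0 (enorm xi) u t) by lra.
    pose proof (A_RInt M T Mc HexM HM3b_ HM3c HT0 HT u t ltac:(lra)) as IA.
    assert (IPQ : RInt (fun y => Rabs (Pf M y) * Rabs (Q1 M y)) u t <= Rabs C3 * K1).
    { apply Rle_trans with (RInt (fun y => Rabs C3 * (fP y * pw y (- gamma))) u t).
      - apply RInt_le. lra.
        + apply ex_RInt_co; try lra. intros y Hy. apply cR_mult. apply cR_abs, (cont_P M); auto.
          apply cR_abs, (cont_Q1 M); auto.
        + apply ex_RInt_co; try lra. intros y Hy. apply cR_scal, cR_mult. apply fPc; auto.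
          apply (cont_of_der _ y _ (d_pw y (- gamma) ltac:(lra))).
        + intros y Hy. rewrite HfP by lra. unfold Q1. rewrite Rabs_Ropp.
          pose proof (HC3 y ltac:(lra)). pose proof (pw_pos y (- gamma)).
          assert (fP y >= 0) by (unfold fP; apply Rle_ge, Rabs_pos).
          assert (C3 * pw y (- gamma) <= Rabs C3 * pw y (- gamma)).
          { apply Rmult_le_compat_r. lra. apply Rle_abs. }
          assert (fP y * Rabs (Iinf M y) <= fP y * (Rabs C3 * pw y (- gamma))) by (apply Rmult_le_compat_l; lra).
          lra.
      - assert (E : RInt (fun y => Rabs C3 * (fP y * pw y (- gamma))) u t = Rabs C3 * RInt (fun y => fP y * pw y (- gamma)) u t).
        { exact (@RInt_scal R_CompleteNormedModule (fun y => fP y * pw y (- gamma)) u t (Rabs C3)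
            (ltac:(apply ex_RInt_co; try lra; intros y Hy; apply cR_mult; [apply fPc; auto | apply (cont_of_der _ y _ (d_pw y (- gamma) ltac:(lra)))]))). }
        rewrite E. apply Rmult_le_compat_l. apply Rabs_pos.
        apply (ibp_bound fP (Rabs C1) alpha gamma T u t); auto; try lra.
        intros y Hy. unfold fP; apply Rabs_pos. apply Rabs_pos.
        intros y Hy. eapply Rle_trans. apply HC1; auto. apply Rmult_le_compat_r. left; apply pw_pos. apply Rle_abs. }
    assert (IP : enorm xi * RInt (fun y => Rabs (Pf M y)) u t <= Rabs C1 * N).
    { assert (E : RInt (fun y => Rabs (Pf M y)) u t = RInt fP u t).
      { apply RInt_ext. intros y Hy. apply HfP. rewrite Rmin_left in Hy by lra. lra. }
      rewrite E.
      assert (E2 : RInt fP 0 u + RInt fP u t = RInt fP 0 t).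
      { exact (@RInt_Chasles R_CompleteNormedModule fP 0 u t (ex_RInt0 fP 0 u fP0 ltac:(lra) ltac:(lra)) (ex_RInt0 fP u t fP0 ltac:(lra) ltac:(lra))). }
      assert (0 <= RInt fP 0 u).
      { apply RInt_nonneg. lra. apply ex_RInt0; auto; lra. intros; unfold fP; apply Rabs_pos. }
      pose proof (HC1 t ltac:(lra)). fold fP in H0.
      assert (Hx : 0 <= enorm xi) by apply sqrt_pos.
      assert (RInt fP u t <= Rabs C1 * pw t alpha).
      { assert (C1 * pw t alpha <= Rabs C1 * pw t alpha) by (apply Rmult_le_compat_r; [left; apply pw_pos | apply Rle_abs]). lra. }
      apply Rle_trans with (enorm xi * (Rabs C1 * pw t alpha)). apply Rmult_le_compat_l; auto.
      pose proof (Rabs_pos C1). nra. }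
    pose proof (Rabs_pos C3).
    assert (4 * RInt (fun y => Rabs (Pf M y) * Rabs (Q1 M y)) u t <= 4 * (Rabs C3 * K1)) by lra.
    unfold Kh. lra.
  -
    destruct (HM1b Haneg) as [C1 HC1].
    set (Kh := 24 * / 1296 + 4 * (/ 2 * (Rabs C1 + A M T)) + 4 * (Rabs C1 * N)).
    assert (HKh : 0 <= Kh).
    { unfold Kh. pose proof (Rabs_pos C1). pose proof (HAT T (Rle_refl T)).
      pose proof (Rmult_le_pos _ _ H (Rlt_le _ _ HN)). lra. }
    exists (exp (Kh + 8)). split. apply exp_pos.
    intros xi Hlen Hne t Ht Hz. split; [intros; lra | intros _].
    assert (Hx : 0 < enorm xi) by (pose proof (sqrt_pos (fold_right (fun x acc => x ^ 2 + acc) 0 xi)); unfold enorm in *; lra).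
    destruct (zone_neg T N alpha t xi Haneg HT0 HN Hx Ht Hz) as [[Hs1 Hs2] Hzu].
    apply (main_est M T C3 gamma n W); auto; try lra.
    intros u Hu HTu.
    rewrite (RInt_hx_split M T Mc HexM HexMM HM3b_ HT0 (enorm xi) u t) by lra.
    pose proof (A_RInt M T Mc HexM HM3b_ HM3c HT0 HT u t ltac:(lra)) as IA.
    assert (EP : RInt (fun y => Rabs (Pf M y)) u t = RInt fP u t).
    { apply RInt_ext. intros y Hy. apply HfP. rewrite Rmin_left in Hy by lra. lra. }
    destruct (HC1 u ltac:(lra)) as [HexP HIP]. fold fP in HexP, HIP.
    assert (IfP : RInt fP u t <= Iinf fP u).
    { apply (RInt_le_Iinf fP u t); auto; try lra. intros; unfold fP; apply Rabs_pos. }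
    assert (HIP' : Iinf fP u <= Rabs C1 * pw u alpha).
    { eapply Rle_trans. apply HIP. apply Rmult_le_compat_r. left; apply pw_pos. apply Rle_abs. }
    pose proof (pw_le1 u alpha ltac:(lra) Haneg) as Hpw1. pose proof (pw_pos u alpha).
    pose proof (Rabs_pos C1).
    assert (IQ : RInt (fun y => Q1 M y * Q1 M y) u t <= A M T).
    { destruct (IQ1sq M HM3b_ u ltac:(lra)) as [E1 V1].
      destruct (RInt_le_Iinf (fun y => Q1 M y * Q1 M y) u t) as [H1 _]; auto; try lra.
      intros y Hy. apply cR_mult; apply (cont_Q1 M); auto.
      intros y Hy. apply Rle_0_sqr.
      pose proof (HAT u ltac:(lra)). lra. }
    assert (IPQ : RInt (fun y => Rabs (Pf M y) * Rabs (Q1 M y)) u t <= / 2 * (Rabs C1 + A M T)).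
    { apply Rle_trans with (RInt (fun y => / 2 * (fP y + Q1 M y * Q1 M y)) u t).
      - apply RInt_le. lra.
        + apply ex_RInt_co; try lra. intros y Hy. apply cR_mult. apply cR_abs, (cont_P M); auto.
          apply cR_abs, (cont_Q1 M); auto.
        + apply ex_RInt_co; try lra. intros y Hy. apply cR_scal, cR_plus. apply fPc; auto.
          apply cR_mult; apply (cont_Q1 M); auto.
        + intros y Hy. rewrite <- HfP by lra. pose proof (HP1 y ltac:(lra)). pose proof (Rabs_pos (Pf M y)).
          assert (EQ : Q1 M y * Q1 M y = Rabs (Q1 M y) * Rabs (Q1 M y)).
          { rewrite <- Rabs_mult. rewrite Rabs_pos_eq. auto. apply Rle_0_sqr. }
          rewrite EQ. pose proof (pow2_ge_0 (Rabs (Pf M y) - Rabs (Q1 M y))). nra.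
      - assert (E : RInt (fun y => / 2 * (fP y + Q1 M y * Q1 M y)) u t = / 2 * (RInt fP u t + RInt (fun y => Q1 M y * Q1 M y) u t)).
        { assert (Ea : ex_RInt fP u t) by (apply ex_RInt_co; auto; lra).
          assert (Eb : ex_RInt (fun y => Q1 M y * Q1 M y) u t).
          { apply ex_RInt_co; try lra. intros y Hy. apply cR_mult; apply (cont_Q1 M); auto. }
          assert (Ec : ex_RInt (fun y => fP y + Q1 M y * Q1 M y) u t).
          { apply ex_RInt_co; try lra. intros y Hy. apply cR_plus. apply fPc; auto. apply cR_mult; apply (cont_Q1 M); auto. }
          transitivity (/ 2 * RInt (fun y => fP y + Q1 M y * Q1 M y) u t).
          exact (@RInt_scal R_CompleteNormedModule (fun y => fP y + Q1 M y * Q1 M y) u t (/ 2) Ec).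
          f_equal. exact (@RInt_plus R_CompleteNormedModule fP (fun y => Q1 M y * Q1 M y) u t Ea Eb). }
        rewrite E. assert (RInt fP u t <= Rabs C1) by nra. lra. }
    assert (IP : enorm xi * RInt (fun y => Rabs (Pf M y)) u t <= Rabs C1 * N).
    { rewrite EP. pose proof (Hzu u ltac:(lra)).
      apply Rle_trans with (enorm xi * (Rabs C1 * pw u alpha)). apply Rmult_le_compat_l; lra.
      nra. }
    unfold Kh. lra.
Qed.
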